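(* Let $\mathcal X$ be a Scott set, $T\in\mathcal X$ a complete consistent extension of $\mathrm{PA}$, $M\models T$ a model coded in $\mathcal X$, and $U$ a non-principal ultrafilter on the Boolean algebra $\mathcal X$. Then $K=\prod_{\mathcal X}M/U$ is an elementary extension of $M$ (via $c\mapsto[\bar c]$, $\bar c$ the constant function) and $K$ is recursively saturated.
   Context: A Scott set is a nonempty $\mathcal X\subseteq\mathcal P(\omega)$ closed under finite unions, complements and Turing reducibility, such that every theory in $\mathcal X$ has a complete consistent extension in $\mathcal X$. $M$ is coded in $\mathcal X$ if (up to isomorphism) its domain is a subset of $\omega$ belonging to $\mathcal X$ and its elementary diagram $\mathrm{Th}(M,a)_{a\in M}$ (as a set of Gödel numbers) belongs to $\mathcal X$. $\prod_{\mathcal X}M$ is the set of functions $f:\omega\to M$ whose graphs (coded via pairing) belong to $\mathcal X$. For an ultrafilter $U$ on $\mathcal X$, $f\equiv_U g$ iff $\{n:f(n)=g(n)\}\in U$, and $\prod_{\mathcal X}M/U$ is the set of $\equiv_U$-classes with $+,\cdot,<,0,1$ interpreted pointwise (mod $U$). Recursively saturated: every type over the model with finitely many parameters whose set of formulas is recursive is realized. *)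

(* Defs.v *)
From Stdlib Require Import List Arith ClassicalEpsilon ClassicalDescription.
Import ListNotations.

Inductive rcode : Type :=
| rZero | rSucc | rProj (i : nat) | rOracle
| rComp (f : rcode) (gs : list rcode)
| rPrec (f g : rcode)
| rMin (f : rcode).

(* [reval B c xs v]: program [c] with oracle [B] on arguments [xs] halts with
   output [v]. Missing arguments default to 0. *)
Inductive reval (B : nat -> Prop) : rcode -> list nat -> nat -> Prop :=
| ev_zero xs : reval B rZero xs 0
| ev_succ xs : reval B rSucc xs (S (nth 0 xs 0))
| ev_proj i xs : reval B (rProj i) xs (nth i xs 0)
| ev_oracle_in xs : B (nth 0 xs 0) -> reval B rOracle xs 1
| ev_oracle_out xs : ~ B (nth 0 xs 0) -> reval B rOracle xs 0
| ev_comp f gs xs ys v :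
    Forall2 (fun g y => reval B g xs y) gs ys -> reval B f ys v ->
    reval B (rComp f gs) xs v
| ev_prec0 f g xs v : reval B f xs v -> reval B (rPrec f g) (0 :: xs) v
| ev_precS f g n xs v w :
    reval B (rPrec f g) (n :: xs) v -> reval B g (n :: v :: xs) w ->
    reval B (rPrec f g) (S n :: xs) w
| ev_min f xs n :
    reval B f (n :: xs) 0 ->
    (forall m, m < n -> exists k, reval B f (m :: xs) (S k)) ->
    reval B (rMin f) xs n.

Definition turing_le (A B : nat -> Prop) : Prop :=
  exists c : rcode, forall n,
    (A n -> reval B c [n] 1) /\ (~ A n -> reval B c [n] 0).

Definition recursive (A : nat -> Prop) : Prop := turing_le A (fun _ => False).

(* Language of arithmetic {0,1,+,*,<} with constant symbols c_k (k : nat);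
   de Bruijn variables. *)

Inductive term : Type :=
| tVar (n : nat) | tConst (k : nat) | tZero | tOne
| tPlus (t u : term) | tTimes (t u : term).

Inductive form : Type :=
| fEq (t u : term) | fLt (t u : term) | fFalse
| fImp (p q : form) | fAll (p : form).

Definition fNeg p := fImp p fFalse.
Definition fAnd p q := fNeg (fImp p (fNeg q)).
Definition fIff p q := fAnd (fImp p q) (fImp q p).
Definition fEx p := fNeg (fAll (fNeg p)).

Definition pair (a b : nat) : nat := (a + b) * (a + b + 1) / 2 + b.

Fixpoint gnt (t : term) : nat :=
  match t with
  | tVar n => pair 0 n
  | tConst k => pair 1 k
  | tZero => pair 2 0
  | tOne => pair 3 0
  | tPlus t u => pair 4 (pair (gnt t) (gnt u))
  | tTimes t u => pair 5 (pair (gnt t) (gnt u))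
  end.

Fixpoint gn (p : form) : nat :=
  match p with
  | fEq t u => pair 0 (pair (gnt t) (gnt u))
  | fLt t u => pair 1 (pair (gnt t) (gnt u))
  | fFalse => pair 2 0
  | fImp p q => pair 3 (pair (gn p) (gn q))
  | fAll p => pair 4 (gn p)
  end.

Fixpoint tbound (k : nat) (t : term) : Prop :=
  match t with
  | tVar n => n < k
  | tConst _ | tZero | tOne => True
  | tPlus t u | tTimes t u => tbound k t /\ tbound k u
  end.
Fixpoint fbound (k : nat) (p : form) : Prop :=
  match p with
  | fEq t u | fLt t u => tbound k t /\ tbound k u
  | fFalse => True
  | fImp p q => fbound k p /\ fbound k q
  | fAll p => fbound (S k) p
  end.
Definition sentence (p : form) : Prop := fbound 0 p.

Fixpoint tconst (k : nat) (t : term) : Prop :=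
  match t with
  | tConst j => j = k
  | tVar _ | tZero | tOne => False
  | tPlus t u | tTimes t u => tconst k t \/ tconst k u
  end.
Fixpoint fconst (k : nat) (p : form) : Prop :=
  match p with
  | fEq t u | fLt t u => tconst k t \/ tconst k u
  | fFalse => False
  | fImp p q => fconst k p \/ fconst k q
  | fAll p => fconst k p
  end.
Definition pure (p : form) : Prop := forall k, ~ fconst k p.

Fixpoint tsubst (s : nat -> term) (t : term) : term :=
  match t with
  | tVar n => s n
  | tConst k => tConst k
  | tZero => tZero
  | tOne => tOne
  | tPlus t u => tPlus (tsubst s t) (tsubst s u)
  | tTimes t u => tTimes (tsubst s t) (tsubst s u)
  end.
Definition tshift := tsubst (fun n => tVar (S n)).
Definition up (s : nat -> term) (n : nat) : term :=
  match n with 0 => tVar 0 | S m => tshift (s m) end.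
Fixpoint fsubst (s : nat -> term) (p : form) : form :=
  match p with
  | fEq t u => fEq (tsubst s t) (tsubst s u)
  | fLt t u => fLt (tsubst s t) (tsubst s u)
  | fFalse => fFalse
  | fImp p q => fImp (fsubst s p) (fsubst s q)
  | fAll p => fAll (fsubst (up s) p)
  end.
Definition fshift := fsubst (fun n => tVar (S n)).
Definition inst (t : term) (p : form) : form :=
  fsubst (fun n => match n with 0 => t | S m => tVar m end) p.

Inductive LAx : form -> Prop :=
| ax1 p q : LAx (fImp p (fImp q p))
| ax2 p q r : LAx (fImp (fImp p (fImp q r)) (fImp (fImp p q) (fImp p r)))
| ax3 p : LAx (fImp (fNeg (fNeg p)) p)
| ax4 p t : LAx (fImp (fAll p) (inst t p))
| ax5 p q : LAx (fImp (fAll (fImp p q)) (fImp (fAll p) (fAll q)))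
| ax6 p : LAx (fImp p (fAll (fshift p)))
| ax_refl t : LAx (fEq t t)
| ax_eq t1 t2 u1 u2 :
    LAx (fImp (fEq t1 u1) (fImp (fEq t2 u2) (fImp (fEq t1 t2) (fEq u1 u2))))
| ax_lt t1 t2 u1 u2 :
    LAx (fImp (fEq t1 u1) (fImp (fEq t2 u2) (fImp (fLt t1 t2) (fLt u1 u2))))
| ax_plus t1 t2 u1 u2 :
    LAx (fImp (fEq t1 u1) (fImp (fEq t2 u2) (fEq (tPlus t1 t2) (tPlus u1 u2))))
| ax_times t1 t2 u1 u2 :
    LAx (fImp (fEq t1 u1) (fImp (fEq t2 u2) (fEq (tTimes t1 t2) (tTimes u1 u2))))
| ax_gen p : LAx p -> LAx (fAll p).

Inductive Prf (G : form -> Prop) : form -> Prop :=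
| prf_ax p : LAx p -> Prf G p
| prf_hyp p : G p -> Prf G p
| prf_mp p q : Prf G (fImp p q) -> Prf G p -> Prf G q.

Definition decode (A : nat -> Prop) : form -> Prop := fun p => A (gn p).
Definition consistent (A : nat -> Prop) : Prop := ~ Prf (decode A) fFalse.
Definition is_theory (A : nat -> Prop) : Prop :=
  forall n, A n -> exists p, n = gn p /\ sentence p.
Definition complete (A : nat -> Prop) : Prop :=
  forall p, sentence p -> A (gn p) \/ A (gn (fNeg p)).
Definition is_LA_theory (A : nat -> Prop) : Prop :=
  forall n, A n -> exists p, n = gn p /\ sentence p /\ pure p.
Definition LA_complete (A : nat -> Prop) : Prop :=
  forall p, sentence p -> pure p -> A (gn p) \/ A (gn (fNeg p)).

Definition succ (t : term) := tPlus t tOne.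
Definition v0 := tVar 0. Definition v1 := tVar 1. Definition v2 := tVar 2.
Definition PA_basic : list form :=
  [ fAll (fNeg (fEq (succ v0) tZero));
    fAll (fAll (fImp (fEq (succ v1) (succ v0)) (fEq v1 v0)));
    fAll (fEq (tPlus v0 tZero) v0);
    fAll (fAll (fEq (tPlus v1 (succ v0)) (succ (tPlus v1 v0))));
    fAll (fEq (tTimes v0 tZero) tZero);
    fAll (fAll (fEq (tTimes v1 (succ v0)) (tPlus (tTimes v1 v0) v1)));
    fAll (fAll (fIff (fLt v1 v0) (fEx (fEq (tPlus v2 (succ v0)) v1)))) ].
Definition ind_ax (p : form) : form :=
  fImp (fAnd (inst tZero p)
             (fAll (fImp p (fsubst (fun n => match n with
                                             | 0 => succ (tVar 0)
                                             | m => tVar m end) p))))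
       (fAll p).
Fixpoint nall (k : nat) (p : form) : form :=
  match k with 0 => p | S k => fAll (nall k p) end.
Definition PA_axiom (p : form) : Prop :=
  In p PA_basic \/
  (exists k q, pure q /\ p = nall k (ind_ax q) /\ sentence p).

Definition compl_ext_PA (T : nat -> Prop) : Prop :=
  is_LA_theory T /\ consistent T /\ LA_complete T /\
  (forall p, PA_axiom p -> T (gn p)).

Record structure := {
  dom :> Type;
  szero : dom; sone : dom;
  sadd : dom -> dom -> dom; smul : dom -> dom -> dom;
  slt : dom -> dom -> Prop }.

Definition scons {A : Type} (a : A) (r : nat -> A) (n : nat) : A :=
  match n with 0 => a | S m => r m end.

Fixpoint teval (M : structure) (c r : nat -> M) (t : term) : M :=
  match t with
  | tVar n => r n
  | tConst k => c k
  | tZero => szero M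
  | tOne => sone M
  | tPlus t u => sadd M (teval M c r t) (teval M c r u)
  | tTimes t u => smul M (teval M c r t) (teval M c r u)
  end.

(* c : interpretation of constant symbols, r : assignment of variables *)
Fixpoint sat (M : structure) (c r : nat -> M) (p : form) : Prop :=
  match p with
  | fEq t u => teval M c r t = teval M c r u
  | fLt t u => slt M (teval M c r t) (teval M c r u)
  | fFalse => False
  | fImp p q => sat M c r p -> sat M c r q
  | fAll p => forall a : M, sat M c (scons a r) p
  end.

Definition psat (M : structure) (r : nat -> M) (p : form) : Prop :=
  sat M (fun _ => szero M) r p.

Definition models_LA (M : structure) (T : nat -> Prop) : Prop :=
  forall p, sentence p -> pure p -> T (gn p) -> psat M (fun _ => szero M) p.

Definition scott_set (X : (nat -> Prop) -> Prop) : Prop :=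
  (exists A, X A) /\
  (forall A B, X A -> X B -> X (fun n => A n \/ B n)) /\
  (forall A, X A -> X (fun n => ~ A n)) /\
  (forall A B, X B -> turing_le A B -> X A) /\
  (forall A, X A -> is_theory A -> consistent A ->
     exists B, X B /\ (forall n, A n -> B n) /\
               is_theory B /\ consistent B /\ complete B).

(* Coded models: [code] identifies M with a subset of omega *)
Section Coded.
Variables (M : structure) (code : M -> nat).

Definition cdomain : nat -> Prop := fun k => exists a, code a = k.

(* c_k is interpreted by the element with code k (if any) *)
Definition cval (k : nat) : M :=
  epsilon (inhabits (szero M)) (fun a => code a = k).

(* elementary diagram Th(M, a)_{a in M}, as a set of Goedel numbers *)
Definition diagram : nat -> Prop := fun n =>
  exists p, n = gn p /\ sentence p /\ (forall k, fconst k p -> cdomain k) /\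
            sat M cval (fun _ => szero M) p.

Definition graph (f : nat -> M) : nat -> Prop :=
  fun m => exists n, m = pair n (code (f n)).
End Coded.

Definition coded_in (X : (nat -> Prop) -> Prop) (M : structure) (code : M -> nat) :=
  (forall a b, code a = code b -> a = b) /\
  X (cdomain M code) /\ X (diagram M code).

Definition ultrafilter (X U : (nat -> Prop) -> Prop) : Prop :=
  (forall A, U A -> X A) /\
  U (fun _ => True) /\ ~ U (fun _ => False) /\
  (forall A B, U A -> U B -> U (fun n => A n /\ B n)) /\
  (forall A B, U A -> X B -> (forall n, A n -> B n) -> U B) /\
  (forall A, X A -> U A \/ U (fun n => ~ A n)).

Definition nonprincipal (U : (nat -> Prop) -> Prop) : Prop :=
  forall n, ~ U (fun m => m = n).

Section Ultrapower.
Variables (X U : (nat -> Prop) -> Prop) (M : structure) (code : M -> nat).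

Definition inProd (f : nat -> M) : Prop := X (graph M code f).

Definition cls (f : nat -> M) : (nat -> M) -> Prop :=
  fun g => inProd g /\ U (fun n => f n = g n).

Definition Kcar : Type := { C : (nat -> M) -> Prop | exists f, inProd f /\ C = cls f }.

Definition rep (C : Kcar) : nat -> M :=
  proj1_sig (constructive_indefinite_description _ (proj2_sig C)).

Variable HK : inhabited Kcar.
Definition Kdflt : Kcar := epsilon HK (fun _ => True).

(* class of f, for f in prod_X M (the default branch is never used, since
   prod_X M is closed under the pointwise operations; it only makes the
   definition total) *)
Definition lift (f : nat -> M) : Kcar :=
  match excluded_middle_informative (inProd f) with
  | left H => exist _ (cls f) (ex_intro _ f (conj H eq_refl))
  | right _ => Kdflt
  end.

Definition Kstr : structure := {|
  dom := Kcar;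
  szero := lift (fun _ => szero M);
  sone := lift (fun _ => sone M);
  sadd := fun C D => lift (fun n => sadd M (rep C n) (rep D n));
  smul := fun C D => lift (fun n => smul M (rep C n) (rep D n));
  slt := fun C D => U (fun n => slt M (rep C n) (rep D n)) |}.

Definition diag_emb (c : M) : Kstr := lift (fun _ => c).
End Ultrapower.

Definition elementary {M N : structure} (e : M -> N) : Prop :=
  forall p, pure p -> forall r : nat -> M, psat M r p <-> psat N (fun n => e (r n)) p.

(* recursive saturation: types p(x, y_1..y_n) of L_A, recursive as a set of
   Goedel numbers, with parameters b_1..b_n (variable 0 is x, variable i is
   y_i, assigned b (i-1)), finitely satisfiable in N, are realized in N *)
Definition rec_saturated (N : structure) : Prop :=
  forall (n : nat) (P : form -> Prop) (b : nat -> N),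
    (forall p, P p -> pure p /\ fbound (S n) p) ->
    recursive (fun m => exists p, P p /\ gn p = m) ->
    (forall l : list form, (forall p, In p l -> P p) ->
       exists a : N, forall p, In p l -> psat N (scons a b) p) ->
    exists a : N, forall p, P p -> psat N (scons a b) p.

(* Main.v *)
Require Import Defs.
From Stdlib Require Import List Arith Lia ClassicalEpsilon ClassicalDescription Classical ProofIrrelevance FunctionalExtensionality PropExtensionality.
Import ListNotations.

Definition chi (A : nat -> Prop) (n : nat) : nat :=
  if excluded_middle_informative (A n) then 1 else 0.

Lemma chi_true A n : A n -> chi A n = 1.
Proof. unfold chi; destruct excluded_middle_informative; tauto. Qed.
Lemma chi_false A n : ~ A n -> chi A n = 0.
Proof. unfold chi; destruct excluded_middle_informative; tauto. Qed.

Fixpoint rsub (d c : rcode) : rcode :=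
  match c with
  | rOracle => d
  | rComp f gs => rComp (rsub d f) (map (rsub d) gs)
  | rPrec f g => rPrec (rsub d f) (rsub d g)
  | rMin f => rMin (rsub d f)
  | c => c
  end.

Section Relat.
Variables (A B : nat -> Prop) (d : rcode).
Hypothesis Hd : forall ys, reval B d ys (chi A (nth 0 ys 0)).

Fixpoint relat c xs v (H : reval A c xs v) {struct H} : reval B (rsub d c) xs v.
Proof.
  destruct H.
  - constructor.
  - constructor.
  - constructor.
  - simpl. rewrite <- (chi_true A _ H). apply Hd.
  - simpl. rewrite <- (chi_false A _ H). apply Hd.
  - simpl. eapply ev_comp; [| exact (relat _ _ _ H0)].
    clear H0. revert gs ys H.
    refine (fix F2 gs ys (HF : Forall2 (fun g y => reval A g xs y) gs ys) :=
      match HF with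
      | Forall2_nil _ => Forall2_nil _
      | Forall2_cons _ _ h t => Forall2_cons _ _ (relat _ _ _ h) (F2 _ _ t)
      end).
  - simpl. apply ev_prec0. exact (relat _ _ _ H).
  - simpl. eapply ev_precS. exact (relat _ _ _ H). exact (relat _ _ _ H0).
  - simpl. apply ev_min. exact (relat _ _ _ H).
    intros m Hm. destruct (H0 m Hm) as [k Hk]. exists k. exact (relat _ _ _ Hk).
Defined.
End Relat.

Definition Comp (B : nat -> Prop) (k : nat) (f : list nat -> nat) : Prop :=
  exists c, forall xs, length xs = k -> reval B c xs (f xs).

Lemma relat_Comp A B k f :
  Comp A k f -> Comp B 1 (fun ys => chi A (nth 0 ys 0)) -> Comp B k f.
Proof.
  intros [c Hc] [d Hd].
  exists (rsub (rComp d [rProj 0]) c). intros xs Hl.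
  apply relat with (A := A). 2: now apply Hc.
  intros ys. apply ev_comp with (ys := [nth 0 ys 0]).
  - constructor. constructor. constructor.
  - exact (Hd [nth 0 ys 0] eq_refl).
Qed.

Section CompB.
Variable B : nat -> Prop.

Lemma C_ext k f g : (forall xs, length xs = k -> f xs = g xs) -> Comp B k f -> Comp B k g.
Proof. intros H [c Hc]; exists c; intros; rewrite <- H; auto. Qed.

Lemma C_zero k : Comp B k (fun _ => 0).
Proof. exists rZero; intros; constructor. Qed.

Lemma C_proj k i : Comp B k (fun xs => nth i xs 0).
Proof. exists (rProj i); intros; constructor. Qed.

Lemma C_succ : Comp B 1 (fun xs => S (nth 0 xs 0)).
Proof. exists rSucc; intros; constructor. Qed.

Lemma C_oracle : Comp B 1 (fun xs => chi B (nth 0 xs 0)).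
Proof.
  exists rOracle; intros. unfold chi; destruct excluded_middle_informative.
  now constructor. now constructor.
Qed.

Lemma C_comp k m f gs :
  Comp B m f -> Forall (Comp B k) gs -> length gs = m ->
  Comp B k (fun xs => f (map (fun g => g xs) gs)).
Proof.
  intros [c Hc] HF Hl.
  assert (exists cs, forall xs, length xs = k ->
            Forall2 (fun g y => reval B g xs y) cs (map (fun g => g xs) gs)) as [cs Hcs].
  { clear Hl. induction HF as [|g gs [cg Hg] _ [cs Hcs]].
    - exists []. intros; constructor.
    - exists (cg :: cs). intros; simpl; constructor; auto. }
  exists (rComp c cs). intros xs Hxs. eapply ev_comp. apply Hcs; auto.
  apply Hc. rewrite length_map; auto.
Qed.

Fixpoint precf (f : list nat -> nat) (g : list nat -> nat) (n : nat) (xs : list nat) : nat :=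
  match n with
  | 0 => f xs
  | S n => g (n :: precf f g n xs :: xs)
  end.

Lemma C_prec k f g :
  Comp B k f -> Comp B (S (S k)) g ->
  Comp B (S k) (fun xs => precf f g (hd 0 xs) (tl xs)).
Proof.
  intros [cf Hf] [cg Hg]. exists (rPrec cf cg).
  intros [|n xs] Hl; [discriminate|]. simpl in Hl |- *. injection Hl as Hl.
  induction n; simpl.
  - constructor. auto.
  - eapply ev_precS. apply IHn. apply Hg. simpl; auto.
Qed.

Lemma nat_least (P : nat -> Prop) : (exists n, P n) -> exists n, P n /\ forall m, m < n -> ~ P m.
Proof.
  intros [n Hn]. induction n as [n IH] using lt_wf_ind.
  destruct (classic (exists m, m < n /\ P m)) as [[m [Hm Pm]]|Hno].
  - apply (IH m Hm Pm).
  - exists n; split; auto. intros m Hm Pm; apply Hno; eauto.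
Qed.

Definition least (P : nat -> Prop) : nat :=
  epsilon (inhabits 0) (fun n => P n /\ forall m, m < n -> ~ P m).

Lemma least_spec P : (exists n, P n) -> P (least P) /\ forall m, m < least P -> ~ P m.
Proof.
  intros H. unfold least. apply epsilon_spec. now apply nat_least.
Qed.

Lemma least_le P n : P n -> least P <= n.
Proof.
  intros Pn. destruct (least_spec P) as [_ H]; eauto.
  destruct (le_lt_dec (least P) n); auto. exfalso; eapply H; eauto.
Qed.

Lemma least_unique P n : P n -> (forall m, m < n -> ~ P m) -> least P = n.
Proof.
  intros Pn Hm. pose proof (least_le P n Pn).
  destruct (least_spec P) as [H1 _]; eauto.
  destruct (Nat.eq_dec (least P) n); auto. exfalso; apply (Hm (least P)); auto; lia.
Qed.

Lemma C_min k f :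
  Comp B (S k) f -> (forall xs, length xs = k -> exists n, f (n :: xs) = 0) ->
  Comp B k (fun xs => least (fun n => f (n :: xs) = 0)).
Proof.
  intros [c Hc] Hex. exists (rMin c). intros xs Hl.
  destruct (least_spec (fun n => f (n :: xs) = 0)) as [H1 H2]; auto.
  constructor.
  - pattern 0 at 2. rewrite <- H1. apply Hc; simpl; auto.
  - intros m Hm. specialize (H2 m Hm). destruct (f (m :: xs)) eqn:E; [tauto|].
    exists n; rewrite <- E; apply Hc; simpl; auto.
Qed.

Lemma C_comp1 k f g : Comp B 1 f -> Comp B k g -> Comp B k (fun xs => f [g xs]).
Proof. intros Hf Hg. apply (C_comp k 1 f [g]); auto. Qed.

Lemma C_comp2 k f g1 g2 : Comp B 2 f -> Comp B k g1 -> Comp B k g2 ->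
  Comp B k (fun xs => f [g1 xs; g2 xs]).
Proof. intros Hf H1 H2. apply (C_comp k 2 f [g1; g2]); auto. Qed.

Lemma C_S k g : Comp B k g -> Comp B k (fun xs => S (g xs)).
Proof. intros H. apply (C_comp1 k _ g C_succ H). Qed.

Lemma C_const k c : Comp B k (fun _ => c).
Proof. induction c. apply C_zero. apply C_S; auto. Qed.

Lemma C_add2 : Comp B 2 (fun xs => nth 0 xs 0 + nth 1 xs 0).
Proof.
  eapply C_ext; [| apply (C_prec 1 (fun xs => nth 0 xs 0) (fun xs => S (nth 1 xs 0)))].
  - intros [|a [|b [|]]] H; try discriminate; simpl. induction a; simpl; auto.
  - apply C_proj.
  - apply (C_comp1 _ (fun xs => S (nth 0 xs 0)) (fun xs => nth 1 xs 0)). apply C_succ. apply C_proj.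
Qed.

Lemma C_add k g1 g2 : Comp B k g1 -> Comp B k g2 -> Comp B k (fun xs => g1 xs + g2 xs).
Proof. intros; eapply C_ext; [|apply (C_comp2 k _ g1 g2 C_add2)]; auto. Qed.

Lemma C_mul2 : Comp B 2 (fun xs => nth 0 xs 0 * nth 1 xs 0).
Proof.
  eapply C_ext; [| apply (C_prec 1 (fun xs => 0) (fun xs => nth 1 xs 0 + nth 2 xs 0))].
  - intros [|a [|b [|]]] H; try discriminate; simpl; clear H. induction a; simpl; auto. rewrite IHa; lia.
  - apply C_zero.
  - apply C_add; apply C_proj.
Qed.

Lemma C_mul k g1 g2 : Comp B k g1 -> Comp B k g2 -> Comp B k (fun xs => g1 xs * g2 xs).
Proof. intros; eapply C_ext; [|apply (C_comp2 k _ g1 g2 C_mul2)]; auto. Qed.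

Lemma C_pred1 : Comp B 1 (fun xs => pred (nth 0 xs 0)).
Proof.
  eapply C_ext; [| apply (C_prec 0 (fun xs => 0) (fun xs => nth 0 xs 0))].
  - intros [|a []] H; try discriminate; simpl. destruct a; auto.
  - apply C_zero.
  - apply C_proj.
Qed.

Lemma C_subr2 : Comp B 2 (fun xs => nth 1 xs 0 - nth 0 xs 0).
Proof.
  eapply C_ext; [| apply (C_prec 1 (fun xs => nth 0 xs 0) (fun xs => pred (nth 1 xs 0)))].
  - intros [|a [|b [|]]] H; try discriminate; simpl; clear H. induction a; simpl; [lia|]. rewrite IHa. lia.
  - apply C_proj.
  - apply (C_comp1 _ (fun xs => pred (nth 0 xs 0)) (fun xs => nth 1 xs 0)). apply C_pred1. apply C_proj.
Qed.

Lemma C_sub k g1 g2 : Comp B k g1 -> Comp B k g2 -> Comp B k (fun xs => g1 xs - g2 xs).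
Proof.
  intros H1 H2; eapply C_ext; [|apply (C_comp2 k _ g2 g1 C_subr2)]; auto.
Qed.

Definition b2n (b : bool) : nat := if b then 1 else 0.

Lemma C_eqb k g1 g2 : Comp B k g1 -> Comp B k g2 -> Comp B k (fun xs => b2n (g1 xs =? g2 xs)).
Proof.
  intros H1 H2. eapply C_ext; [| apply (C_sub k (fun _ => 1) (fun xs => (g1 xs - g2 xs) + (g2 xs - g1 xs)))].
  - intros xs _; cbv beta. destruct (Nat.eqb_spec (g1 xs) (g2 xs)); cbn [b2n]; lia.
  - apply C_const.
  - apply C_add; apply C_sub; auto.
Qed.

Lemma C_ltb k g1 g2 : Comp B k g1 -> Comp B k g2 -> Comp B k (fun xs => b2n (g1 xs <? g2 xs)).
Proof.
  intros H1 H2. eapply C_ext; [| apply (C_sub k (fun _ => 1) (fun xs => 1 - (g2 xs - g1 xs)))].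
  - intros xs _; cbv beta. destruct (Nat.ltb_spec (g1 xs) (g2 xs)); cbn [b2n]; lia.
  - apply C_const.
  - apply C_sub. apply C_const. apply C_sub; auto.
Qed.

Lemma C_ite k c a b : Comp B k c -> Comp B k a -> Comp B k b ->
  Comp B k (fun xs => if c xs =? 0 then b xs else a xs).
Proof.
  intros Hc Ha Hb.
  eapply C_ext; [| apply (C_add k (fun xs => (1 - (1 - c xs)) * a xs) (fun xs => (1 - c xs) * b xs))].
  - intros xs _; cbv beta. destruct (c xs) eqn:E; cbn [Nat.eqb]; lia.
  - apply C_mul; auto. apply C_sub. apply C_const. apply C_sub; auto. apply C_const.
  - apply C_mul; auto. apply C_sub; auto. apply C_const.
Qed.

Lemma C_reindex k m f idx : Comp B m f -> length idx = m ->
  Comp B k (fun xs => f (map (fun i => nth i xs 0) idx)).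
Proof.
  intros Hf Hl. eapply C_ext; [| apply (C_comp k m f (map (fun i xs => nth i xs 0) idx))]; auto.
  - intros xs _; cbv beta. f_equal. rewrite map_map. reflexivity.
  - apply Forall_forall. intros g Hg. apply in_map_iff in Hg as [i [<- _]]. apply C_proj.
  - rewrite length_map; auto.
Qed.

End CompB.

Section More.
Variable B : nat -> Prop.

Lemma C_div2 : Comp B 1 (fun xs => Nat.div2 (nth 0 xs 0)).
Proof.
  eapply C_ext; [| apply (C_min B 1 (fun xs => nth 1 xs 0 - (2 * nth 0 xs 0 + 1)))].
  - intros [|n []] H; try discriminate. cbn [nth].
    apply least_unique.
    + pose proof (Nat.div2_odd n). destruct (Nat.odd n); simpl in *; lia.
    + intros m Hm. pose proof (Nat.div2_odd n). destruct (Nat.odd n); simpl in *; lia.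
  - apply C_sub. apply C_proj. apply C_add. apply C_mul. apply C_const. apply C_proj. apply C_const.
  - intros [|n []] H; try discriminate. exists n. simpl. lia.
Qed.

Lemma C_div2' k g : Comp B k g -> Comp B k (fun xs => Nat.div2 (g xs)).
Proof. intros. apply (C_comp1 B k (fun xs => Nat.div2 (nth 0 xs 0))); auto. apply C_div2. Qed.

Lemma C_pair k g1 g2 : Comp B k g1 -> Comp B k g2 -> Comp B k (fun xs => pair (g1 xs) (g2 xs)).
Proof.
  intros H1 H2. unfold pair.
  eapply C_ext; [| apply C_add; [apply C_div2'; apply C_mul; [apply C_add; [apply H1|apply H2]|apply C_add; [apply C_add; [apply H1|apply H2]|apply C_const]] | apply H2]].
  intros xs _; cbv beta. rewrite Nat.div2_div. reflexivity.
Qed.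

Fixpoint bex (f : list nat -> nat) (n : nat) (xs : list nat) : nat :=
  match n with
  | 0 => 0
  | S n => if f (n :: xs) =? 0 then bex f n xs else 1
  end.

Lemma bex_spec f n xs : bex f n xs <> 0 <-> exists j, j < n /\ f (j :: xs) <> 0.
Proof.
  induction n; simpl.
  - split; [lia| intros [j [Hj _]]; lia].
  - destruct (Nat.eqb_spec (f (n :: xs)) 0).
    + rewrite IHn. split; intros [j [Hj Hf]]; exists j; split; auto.
      destruct (Nat.eq_dec j n); subst; auto; lia.
    + split; [intros _; exists n; auto|lia].
Qed.

Lemma bex_01 f n xs : bex f n xs <= 1.
Proof. induction n; simpl; auto. destruct (_ =? 0); auto. Qed.

Lemma skipn_nth_cons (ys : list nat) s : s < length ys -> skipn s ys = nth s ys 0 :: skipn (S s) ys.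
Proof.
  revert s; induction ys; intros s Hs; simpl in *. lia.
  destruct s; simpl; auto. apply IHys; lia.
Qed.

Lemma map_nth_seq_skip (ys : list nat) n s : n + s = length ys ->
  map (fun i => nth i ys 0) (seq s n) = skipn s ys.
Proof.
  revert s; induction n; intros s Hs; simpl.
  - rewrite skipn_all2; auto; lia.
  - rewrite (skipn_nth_cons ys s); [|lia]. f_equal. apply IHn; lia.
Qed.

Lemma C_bex k f : Comp B (S k) f -> Comp B (S k) (fun xs => bex f (hd 0 xs) (tl xs)).
Proof.
  intros Hf.
  eapply C_ext; [| apply (C_prec B k (fun _ => 0)
     (fun ys => if f (nth 0 ys 0 :: skipn 2 ys) =? 0 then nth 1 ys 0 else 1))].
  - intros [|n xs] H; try discriminate. simpl. clear H. induction n; simpl; auto.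
    rewrite IHn. reflexivity.
  - apply C_zero.
  - apply C_ite. 2: apply C_const. 2: apply C_proj.
    eapply C_ext; [| apply (C_reindex B (S (S k)) (S k) f (0 :: seq 2 k)); auto].
    + intros ys Hl. cbv beta. f_equal. simpl. f_equal.
      apply map_nth_seq_skip. lia.
    + simpl. rewrite length_seq. reflexivity.
Qed.
End More.

Definition Tri s := s * (s + 1) / 2.
Lemma Tri_S s : Tri (S s) = Tri s + S s.
Proof.
  unfold Tri. replace (S s * (S s + 1)) with (s * (s + 1) + S s * 2) by lia.
  rewrite Nat.div_add by lia. reflexivity.
Qed.
Lemma Tri_ge s : s <= Tri s.
Proof. induction s; [simpl; lia|rewrite Tri_S; lia]. Qed.
Lemma Tri_mono s s' : s < s' -> Tri s + s < Tri s'.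
Proof.
  induction 1. rewrite Tri_S; lia. rewrite Tri_S; lia.
Qed.
Lemma pair_Tri a b : pair a b = Tri (a + b) + b.
Proof. reflexivity. Qed.
Lemma pair_inj a b a' b' : pair a b = pair a' b' -> a = a' /\ b = b'.
Proof.
  rewrite !pair_Tri. intros H.
  destruct (lt_eq_lt_dec (a + b) (a' + b')) as [[Hl|He]|Hl].
  - pose proof (Tri_mono _ _ Hl). lia.
  - rewrite He in H. lia.
  - pose proof (Tri_mono _ _ Hl). lia.
Qed.
Lemma pair_ge1 a b : a <= pair a b.
Proof. rewrite pair_Tri. pose proof (Tri_ge (a + b)). lia. Qed.
Lemma pair_ge2 a b : b <= pair a b.
Proof. rewrite pair_Tri. lia. Qed.

Section XS.
Variable X : (nat -> Prop) -> Prop.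
Hypothesis HX : scott_set X.

Lemma X_turing J A : X J -> Comp J 1 (fun xs => chi A (nth 0 xs 0)) -> X A.
Proof.
  intros HJ [c Hc]. destruct HX as [_ [_ [_ [Ht _]]]]. apply (Ht A J HJ).
  exists c. intros n. specialize (Hc [n] eq_refl). simpl in Hc. split; intros Hn.
  - rewrite chi_true in Hc; auto.
  - rewrite chi_false in Hc; auto.
Qed.

Definition CX k f := exists J, X J /\ Comp J k f.

Lemma CX_set A : CX 1 (fun xs => chi A (nth 0 xs 0)) -> X A.
Proof. intros [J [HJ Hc]]. eapply X_turing; eauto. Qed.

Lemma X_CX A : X A -> CX 1 (fun xs => chi A (nth 0 xs 0)).
Proof. intros HA. exists A; split; auto. apply C_oracle. Qed.

Lemma CX_free k f : (forall B, Comp B k f) -> CX k f.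
Proof. intros H. destruct HX as [[A HA] _]. exists A; auto. Qed.

Lemma X_ext A A' : X A -> (forall n, A n <-> A' n) -> X A'.
Proof.
  intros HA H. apply CX_set. destruct (X_CX A HA) as [J [HJ Hc]]. exists J; split; auto.
  eapply C_ext; [|exact Hc]. intros xs _. unfold chi.
  destruct excluded_middle_informative; destruct excluded_middle_informative; firstorder.
Qed.

Lemma X_union A A' : X A -> X A' -> X (fun n => A n \/ A' n).
Proof. destruct HX as [_ [H _]]. apply H. Qed.

Lemma X_compl A : X A -> X (fun n => ~ A n).
Proof. destruct HX as [_ [_ [H _]]]. apply H. Qed.

Lemma X_inter A A' : X A -> X A' -> X (fun n => A n /\ A' n).
Proof.
  intros H1 H2. apply (X_ext (fun n => ~ (~ A n \/ ~ A' n))). apply X_compl, X_union; apply X_compl; auto.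
  intros n; simpl; destruct (classic (A n)), (classic (A' n)); tauto.
Qed.

Definition join (A A' : nat -> Prop) (m : nat) : Prop :=
  (m = 2 * Nat.div2 m /\ A (Nat.div2 m)) \/ (m <> 2 * Nat.div2 m /\ A' (Nat.div2 m)).

Lemma X_join A A' : X A -> X A' -> X (join A A').
Proof.
  intros HA HA'. apply X_union.
  - apply (X_turing A); auto.
    eapply C_ext; [| apply C_mul; [apply (C_eqb A 1 (fun xs => nth 0 xs 0) (fun xs => 2 * Nat.div2 (nth 0 xs 0)))|
          apply (C_comp1 A 1 (fun xs => chi A (nth 0 xs 0))); [apply C_oracle| apply C_div2]]].
    + intros xs _; cbv beta. unfold chi. destruct (Nat.eqb_spec (nth 0 xs 0) (2 * Nat.div2 (nth 0 xs 0))); cbn [b2n];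
      simpl nth; repeat destruct excluded_middle_informative; try tauto; try lia; match goal with |- ?G => idtac G end.
    + apply C_proj.
    + apply C_mul. apply C_const. apply C_div2.
  - apply (X_turing A'); auto.
    eapply C_ext; [| apply C_mul; [apply C_sub; [apply (C_const A' 1 1)|apply (C_eqb A' 1 (fun xs => nth 0 xs 0) (fun xs => 2 * Nat.div2 (nth 0 xs 0)))]|
          apply (C_comp1 A' 1 (fun xs => chi A' (nth 0 xs 0))); [apply C_oracle| apply C_div2]]].
    + intros xs _; cbv beta. unfold chi. destruct (Nat.eqb_spec (nth 0 xs 0) (2 * Nat.div2 (nth 0 xs 0))); cbn [b2n];
      simpl nth; repeat destruct excluded_middle_informative; try tauto; try lia; match goal with |- ?G => idtac G end.
    + apply C_proj.
    + apply C_mul. apply C_const. apply C_div2.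
Qed.

Lemma join_l A A' : Comp (join A A') 1 (fun xs => chi A (nth 0 xs 0)).
Proof.
  eapply C_ext; [| apply (C_comp1 _ 1 (fun xs => chi (join A A') (nth 0 xs 0)) (fun xs => 2 * nth 0 xs 0))].
  - intros xs _; cbv beta; cbn [nth]. unfold chi, join. rewrite Nat.div2_double.
    repeat destruct excluded_middle_informative; tauto.
  - apply C_oracle.
  - apply C_mul. apply C_const. apply C_proj.
Qed.

Lemma join_r A A' : Comp (join A A') 1 (fun xs => chi A' (nth 0 xs 0)).
Proof.
  eapply C_ext; [| apply (C_comp1 _ 1 (fun xs => chi (join A A') (nth 0 xs 0)) (fun xs => S (2 * nth 0 xs 0)))].
  - intros xs _; cbv beta; cbn [nth]. unfold chi, join. rewrite Nat.div2_succ_double.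
    repeat destruct excluded_middle_informative; try tauto; try lia; exfalso; intuition lia.
  - apply C_oracle.
  - apply C_S. apply C_mul. apply C_const. apply C_proj.
Qed.

Lemma CX_common k f m g : CX k f -> CX m g ->
  exists J, X J /\ Comp J k f /\ Comp J m g.
Proof.
  intros [J1 [H1 C1]] [J2 [H2 C2]]. exists (join J1 J2). split; [apply X_join; auto|].
  split; eapply relat_Comp; eauto. apply join_l. apply join_r.
Qed.

Lemma CX_comp k m f gs : CX m f -> Forall (CX k) gs -> length gs = m ->
  CX k (fun xs => f (map (fun g => g xs) gs)).
Proof.
  intros Hf HF Hl.
  assert (exists J, X J /\ Comp J m f /\ Forall (Comp J k) gs) as [J [HJ [Cf Cg]]].
  { clear Hl. induction HF as [|g gs Hg _ IH].
    - destruct Hf as [J [HJ Cf]]. exists J; auto.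
    - destruct IH as [J [HJ [Cf Cgs]]].
      destruct Hg as [J2 [HJ2 Cg]].
      exists (join J J2). split; [apply X_join; auto|]. split.
      + eapply relat_Comp; eauto. apply join_l.
      + constructor. eapply relat_Comp; eauto. apply join_r.
        eapply Forall_impl; [|exact Cgs]. intros h Hh. eapply relat_Comp; eauto. apply join_l. }
  exists J; split; auto. apply C_comp with (m := m); auto.
Qed.

Lemma CX_ext k f g : (forall xs, length xs = k -> f xs = g xs) -> CX k f -> CX k g.
Proof. intros H [J [HJ C]]; exists J; split; auto. eapply C_ext; eauto. Qed.

Lemma CX_comp1 k f g : CX 1 f -> CX k g -> CX k (fun xs => f [g xs]).
Proof. intros Hf Hg. apply (CX_comp k 1 f [g]); auto. Qed.

Lemma CX_comp2 k f g1 g2 : CX 2 f -> CX k g1 -> CX k g2 -> CX k (fun xs => f [g1 xs; g2 xs]).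
Proof. intros Hf H1 H2. apply (CX_comp k 2 f [g1; g2]); auto. Qed.

Lemma CX_op2 k (op : nat -> nat -> nat) g1 g2 :
  (forall B, Comp B 2 (fun xs => op (nth 0 xs 0) (nth 1 xs 0))) ->
  CX k g1 -> CX k g2 -> CX k (fun xs => op (g1 xs) (g2 xs)).
Proof.
  intros Hop H1 H2. eapply CX_ext; [| apply (CX_comp2 k (fun xs => op (nth 0 xs 0) (nth 1 xs 0)) g1 g2); auto].
  - intros xs _; reflexivity.
  - apply CX_free. apply Hop.
Qed.

Lemma CX_add k g1 g2 : CX k g1 -> CX k g2 -> CX k (fun xs => g1 xs + g2 xs).
Proof. apply (CX_op2 k Nat.add). intros. apply C_add; apply C_proj. Qed.
Lemma CX_mul k g1 g2 : CX k g1 -> CX k g2 -> CX k (fun xs => g1 xs * g2 xs).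
Proof. apply (CX_op2 k Nat.mul). intros. apply C_mul; apply C_proj. Qed.
Lemma CX_sub k g1 g2 : CX k g1 -> CX k g2 -> CX k (fun xs => g1 xs - g2 xs).
Proof. apply (CX_op2 k Nat.sub). intros. apply C_sub; apply C_proj. Qed.
Lemma CX_pair k g1 g2 : CX k g1 -> CX k g2 -> CX k (fun xs => pair (g1 xs) (g2 xs)).
Proof. apply (CX_op2 k pair). intros. apply C_pair; apply C_proj. Qed.
Lemma CX_eqb k g1 g2 : CX k g1 -> CX k g2 -> CX k (fun xs => b2n (g1 xs =? g2 xs)).
Proof. apply (CX_op2 k (fun a b => b2n (a =? b))). intros. apply C_eqb; apply C_proj. Qed.
Lemma CX_ltb k g1 g2 : CX k g1 -> CX k g2 -> CX k (fun xs => b2n (g1 xs <? g2 xs)).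
Proof. apply (CX_op2 k (fun a b => b2n (a <? b))). intros. apply C_ltb; apply C_proj. Qed.
Lemma CX_const k c : CX k (fun _ => c).
Proof. apply CX_free. intros; apply C_const. Qed.
Lemma CX_proj k i : CX k (fun xs => nth i xs 0).
Proof. apply CX_free. intros; apply C_proj. Qed.

Lemma CX_ite k c a b : CX k c -> CX k a -> CX k b ->
  CX k (fun xs => if c xs =? 0 then b xs else a xs).
Proof.
  intros Hc Ha Hb.
  eapply CX_ext; [| apply (CX_add k (fun xs => (1 - (1 - c xs)) * a xs) (fun xs => (1 - c xs) * b xs))].
  - intros xs _. destruct (c xs) eqn:E; cbn [Nat.eqb]; lia.
  - apply CX_mul; auto. apply CX_sub. apply CX_const. apply CX_sub; auto. apply CX_const.
  - apply CX_mul; auto. apply CX_sub; auto. apply CX_const.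
Qed.

Lemma CX_prec k f g : CX k f -> CX (S (S k)) g ->
  CX (S k) (fun xs => precf f g (hd 0 xs) (tl xs)).
Proof.
  intros Hf Hg. destruct (CX_common _ _ _ _ Hf Hg) as [J [HJ [C1 C2]]].
  exists J; split; auto. apply C_prec; auto.
Qed.

Lemma CX_min k f : CX (S k) f -> (forall xs, length xs = k -> exists n, f (n :: xs) = 0) ->
  CX k (fun xs => least (fun n => f (n :: xs) = 0)).
Proof. intros [J [HJ C]] H. exists J; split; auto. apply C_min; auto. Qed.

Lemma CX_bex k f : CX (S k) f -> CX (S k) (fun xs => bex f (hd 0 xs) (tl xs)).
Proof. intros [J [HJ C]]. exists J; split; auto. apply C_bex; auto. Qed.

Lemma CX_chi k A g : X A -> CX k g -> CX k (fun xs => chi A (g xs)).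
Proof. intros HA Hg. apply (CX_comp1 k (fun xs => chi A (nth 0 xs 0))); auto. apply X_CX; auto. Qed.

Lemma CX_reindex k m f idx : CX m f -> length idx = m ->
  CX k (fun xs => f (map (fun i => nth i xs 0) idx)).
Proof. intros [J [HJ C]] Hl. exists J; split; auto. eapply C_reindex; eauto. Qed.

Lemma X_from_test A (t : nat -> nat) : CX 1 (fun xs => t (nth 0 xs 0)) ->
  (forall n, A n <-> t n <> 0) -> X A.
Proof.
  intros Ht HA. apply CX_set.
  eapply CX_ext; [| apply (CX_sub 1 (fun _ => 1) (fun xs => 1 - t (nth 0 xs 0))); [apply CX_const| apply CX_sub; [apply CX_const|exact Ht]]].
  intros xs _. unfold chi. destruct excluded_middle_informative as [h|h]; rewrite HA in h; lia.
Qed.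

End XS.

Section Sat.
Variable M : structure.

Lemma teval_agree k c r r' t : tbound k t -> (forall i, i < k -> r i = r' i) ->
  teval M c r t = teval M c r' t.
Proof. induction t; simpl; intros; intuition; f_equal; auto. Qed.

Lemma sat_agree p : forall k c r r', fbound k p -> (forall i, i < k -> r i = r' i) ->
  (sat M c r p <-> sat M c r' p).
Proof.
  induction p; simpl; intros k c r r' Hb Hr.
  - rewrite (teval_agree k c r r' t), (teval_agree k c r r' u); tauto.
  - rewrite (teval_agree k c r r' t), (teval_agree k c r r' u); tauto.
  - tauto.
  - rewrite (IHp1 k c r r'), (IHp2 k c r r'); tauto.
  - split; intros H a; [rewrite <- (IHp (S k) c (scons a r) (scons a r'))|rewrite (IHp (S k) c (scons a r) (scons a r'))]; auto;
      intros [|i] Hi; simpl; auto; apply Hr; lia.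
Qed.

Lemma teval_ext c r r' t : (forall i, r i = r' i) -> teval M c r t = teval M c r' t.
Proof. induction t; simpl; intros; f_equal; auto. Qed.

Lemma sat_ext p : forall c r r', (forall i, r i = r' i) -> (sat M c r p <-> sat M c r' p).
Proof.
  induction p; simpl; intros c r r' Hr.
  - rewrite (teval_ext c r r' t), (teval_ext c r r' u); tauto.
  - rewrite (teval_ext c r r' t), (teval_ext c r r' u); tauto.
  - tauto.
  - rewrite (IHp1 c r r'), (IHp2 c r r'); tauto.
  - split; intros H a; [rewrite <- (IHp c (scons a r) (scons a r'))|rewrite (IHp c (scons a r) (scons a r'))]; auto;
      intros [|i]; simpl; auto.
Qed.

Lemma teval_pure c c' r t : (forall k, ~ tconst k t) -> teval M c r t = teval M c' r t.
Proof.
  induction t; simpl; intros H; auto.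
  - exfalso; apply (H k); auto.
  - f_equal; [apply IHt1|apply IHt2]; intros k Hk; apply (H k); auto.
  - f_equal; [apply IHt1|apply IHt2]; intros k Hk; apply (H k); auto.
Qed.

Lemma sat_pure p : forall c c' r, pure p -> (sat M c r p <-> sat M c' r p).
Proof.
  unfold pure. induction p; simpl; intros c c' r Hp.
  - rewrite (teval_pure c c' r t), (teval_pure c c' r u); try tauto; intros k Hk; apply (Hp k); auto.
  - rewrite (teval_pure c c' r t), (teval_pure c c' r u); try tauto; intros k Hk; apply (Hp k); auto.
  - tauto.
  - rewrite (IHp1 c c' r), (IHp2 c c' r); try tauto; intros k Hk; apply (Hp k); auto.
  - split; intros H a; [rewrite <- (IHp c c')|rewrite (IHp c c')]; auto.
Qed.

Lemma sat_nall k : forall c r q, sat M c r (nall k q) <->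
  forall s : nat -> M, sat M c (fun i => if i <? k then s i else r (i - k)) q.
Proof.
  induction k; intros c r q; simpl.
  - split.
    + intros H s. rewrite sat_ext; [exact H|]. intros i; simpl. f_equal; lia.
    + intros H. specialize (H r). rewrite sat_ext; [exact H|]. intros i; simpl. f_equal; lia.
  - split.
    + intros H s. specialize (H (s k)). rewrite IHk in H. specialize (H s).
      rewrite sat_ext; [exact H|]. intros i; simpl.
      destruct (Nat.ltb_spec i k), (Nat.ltb_spec i (S k)); try lia; auto.
      assert (i = k) by lia; subst; rewrite Nat.sub_diag; reflexivity.
      replace (i - k) with (S (i - S k)) by lia. reflexivity.
    + intros H a. rewrite IHk. intros s. specialize (H (fun i => if i <? k then s i else a)).
      rewrite sat_ext; [exact H|]. intros i; simpl.
      destruct (Nat.ltb_spec i k), (Nat.ltb_spec i (S k)); try lia; auto.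
      replace (i - k) with 0 by lia. reflexivity.
      replace (i - k) with (S (i - S k)) by lia. reflexivity.
Qed.

End Sat.

Fixpoint impsL (i : nat) (cs : list nat) (p : form) : form :=
  match cs with
  | [] => p
  | c :: cs => fImp (fEq (tVar i) (tConst c)) (impsL (S i) cs p)
  end.

Definition wrap (cs : list nat) (p : form) : form := nall (length cs) (impsL 0 cs p).

Lemma sat_impsL M c r p cs : forall i,
  sat M c r (impsL i cs p) <->
  ((forall j, j < length cs -> r (i + j) = c (nth j cs 0)) -> sat M c r p).
Proof.
  induction cs as [|c0 cs IH]; intros i; simpl.
  - split; auto. intros H; apply H; intros; lia.
  - rewrite IH. split.
    + intros H Hj. apply H. specialize (Hj 0). rewrite Nat.add_0_r in Hj. apply Hj; lia.
      intros j Hjl. replace (S i + j) with (i + S j) by lia. apply (Hj (S j)); lia.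
    + intros H H0 Hj. apply H. intros [|j] Hjl. rewrite Nat.add_0_r; auto.
      replace (i + S j) with (S i + j) by lia. apply Hj; lia.
Qed.

Lemma sat_wrap M c r cs p : fbound (length cs) p ->
  (sat M c r (wrap cs p) <-> sat M c (fun i => c (nth i cs 0)) p).
Proof.
  intros Hb. unfold wrap. rewrite sat_nall. split.
  - intros H. specialize (H (fun i => c (nth i cs 0))). rewrite sat_impsL in H.
    rewrite sat_agree; [apply H| exact Hb|].
    + intros j Hj; simpl. destruct (Nat.ltb_spec j (length cs)); [reflexivity|lia].
    + intros i Hi; simpl. destruct (Nat.ltb_spec i (length cs)); [reflexivity|lia].
  - intros H s. rewrite sat_impsL. intros Hj. rewrite sat_agree; [apply H|exact Hb|].
    intros i Hi. simpl in *. rewrite <- Hj; auto.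
Qed.

Lemma fbound_nall k : forall q m, fbound m (nall k q) <-> fbound (k + m) q.
Proof. induction k; intros q m; simpl. tauto. rewrite IHk. replace (k + S m) with (S (k + m)) by lia. tauto. Qed.

Lemma fbound_impsL cs : forall i p, fbound (i + length cs) p -> fbound (i + length cs) (impsL i cs p).
Proof.
  induction cs as [|c0 cs IH]; intros i p H; simpl in *; auto.
  split; [split; simpl; auto; lia|]. replace (i + S (length cs)) with (S i + length cs) in * by lia.
  apply IH; auto.
Qed.

Lemma sentence_wrap cs p : fbound (length cs) p -> sentence (wrap cs p).
Proof.
  intros H. unfold sentence, wrap. apply fbound_nall. rewrite Nat.add_0_r.
  apply (fbound_impsL cs 0); auto.
Qed.

Lemma fconst_nall k : forall q j, fconst j (nall k q) <-> fconst j q.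
Proof. induction k; intros; simpl; auto. tauto. Qed.

Lemma fconst_impsL cs : forall i p j, fconst j (impsL i cs p) -> In j cs \/ fconst j p.
Proof.
  induction cs as [|c0 cs IH]; intros i p j H; simpl in *; auto.
  destruct H as [[[]|H]|H]. subst; auto. destruct (IH _ _ _ H); auto.
Qed.

Lemma fconst_wrap cs p j : pure p -> fconst j (wrap cs p) -> In j cs.
Proof.
  intros Hp H. unfold wrap in H. rewrite fconst_nall in H. destruct (fconst_impsL _ _ _ _ H); auto.
  exfalso; eapply Hp; eauto.
Qed.

Lemma gnt_inj t : forall u, gnt t = gnt u -> t = u.
Proof.
  induction t; intros [] H; simpl in H; apply pair_inj in H as [H1 H2]; try discriminate;
    try (f_equal; auto; fail);
    try (apply pair_inj in H2 as [H2 H3]; f_equal; auto).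
Qed.

Lemma gn_inj p : forall q, gn p = gn q -> p = q.
Proof.
  induction p; intros [] H; simpl in H; apply pair_inj in H as [H1 H2]; try discriminate;
    try (f_equal; auto; fail);
    try (apply pair_inj in H2 as [H2 H3]; f_equal; auto using gnt_inj).
Qed.

Fixpoint gimps (i : nat) (cs : list nat) (g : nat) : nat :=
  match cs with
  | [] => g
  | c :: cs => pair 3 (pair (pair 0 (pair (pair 0 i) (pair 1 c))) (gimps (S i) cs g))
  end.

Lemma gn_impsL cs : forall i p, gn (impsL i cs p) = gimps i cs (gn p).
Proof. induction cs; intros; simpl; auto. Qed.

Lemma gn_nall k q : gn (nall k q) = Nat.iter k (pair 4) (gn q).
Proof. induction k; simpl; auto. Qed.

Lemma gn_wrap cs p : gn (wrap cs p) = Nat.iter (length cs) (pair 4) (gimps 0 cs (gn p)).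
Proof. unfold wrap. rewrite gn_nall, gn_impsL. reflexivity. Qed.

Section GW.
Variable X : (nat -> Prop) -> Prop.
Hypothesis HX : scott_set X.

Lemma CX_iter k n G : CX X k G -> CX X k (fun xs => Nat.iter n (pair 4) (G xs)).
Proof.
  intros HG. induction n; simpl; auto. apply (CX_pair X HX k (fun _ => 4)); auto. apply CX_const; auto.
Qed.

Lemma CX_gimps N k (L : list nat -> list nat) G :
  (forall i, i < k -> CX X N (fun xs => nth i (L xs) 0)) ->
  (forall xs, length xs = N -> length (L xs) = k) ->
  CX X N G -> CX X N (fun xs => gimps 0 (L xs) (G xs)).
Proof.
  intros HL Hlen HG.
  assert (forall d, d <= k -> CX X N (fun xs => gimps (k - d) (skipn (k - d) (L xs)) (G xs))) as H.
  { induction d; intros Hd.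
    - eapply CX_ext; [|exact HG]. intros xs Hl; simpl. rewrite Nat.sub_0_r, skipn_all2; auto.
      rewrite Hlen; auto.
    - eapply CX_ext; [|apply (CX_pair X HX N (fun _ => 3)); [apply CX_const; auto|
          apply (CX_pair X HX N); [apply (CX_pair X HX N (fun _ => 0)); [apply CX_const; auto|
          apply (CX_pair X HX N); [apply (CX_pair X HX N (fun _ => 0)); [apply CX_const; auto| apply (CX_const X HX N (k - S d))]|
          apply (CX_pair X HX N (fun _ => 1)); [apply CX_const; auto|apply (HL (k - S d)); lia]]]| apply IHd; lia]]].
      intros xs Hl. cbv beta. rewrite (skipn_nth_cons (L xs) (k - S d)) by (rewrite Hlen; auto; lia). cbn [gimps].
      replace (S (k - S d)) with (k - d) by lia. reflexivity. }
  eapply CX_ext; [|apply (H k); auto]. intros xs Hl. rewrite Nat.sub_diag. reflexivity.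
Qed.
End GW.

Set Default Proof Using "All".
Section Coded.
Variable X : (nat -> Prop) -> Prop.
Hypothesis HX : scott_set X.
Variables (M : structure) (code : M -> nat).
Hypothesis Hinj : forall a b, code a = code b -> a = b.
Hypothesis HDom : X (cdomain M code).
Hypothesis HDiag : X (diagram M code).

Notation Dom := (cdomain M code).
Notation D := (diagram M code).
Notation cv := (cval M code).

Let CXc := CX_const X HX.
Let CXp := CX_proj X HX.
Let CXs := CX_sub X HX.
Let CXm := CX_mul X HX.
Let CXa := CX_add X HX.
Let CXch := CX_chi X HX.
Let CXpr := CX_pair X HX.
Let CXe := CX_eqb X HX.


Lemma code_cval k : Dom k -> code (cv k) = k.
Proof.
  intros Hk. unfold cval. apply (epsilon_spec (inhabits (szero M)) (fun a => code a = k)). exact Hk.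
Qed.

Lemma cval_code a : cv (code a) = a.
Proof. apply Hinj. apply code_cval. exists a; auto. Qed.

Lemma diag_wrap cs p : pure p -> fbound (length cs) p -> (forall j, In j cs -> Dom j) ->
  (D (gn (wrap cs p)) <-> psat M (fun i => cv (nth i cs 0)) p).
Proof.
  intros Hp Hb Hc. unfold diagram, psat. split.
  - intros [q [Hq [_ [_ Hs]]]]. apply gn_inj in Hq. subst q.
    rewrite sat_wrap in Hs by auto. rewrite sat_pure; [exact Hs|auto].
  - intros H. exists (wrap cs p). split; auto. split; [apply sentence_wrap; auto|]. split.
    + intros j Hj. apply Hc. eapply fconst_wrap; eauto.
    + rewrite sat_wrap by auto. rewrite sat_pure; [exact H|auto].
Qed.

Lemma nth_map_seq (f : nat -> nat) k i : i < k -> nth i (map f (seq 0 k)) 0 = f i.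
Proof.
  intros Hi. rewrite (nth_indep _ 0 (f 0)) by (rewrite length_map, length_seq; auto).
  rewrite map_nth, seq_nth; auto.
Qed.

Lemma CX_psatG m k (C : nat -> list nat -> nat) (G : list nat -> nat) (Phi : list nat -> form) :
  (forall xs, pure (Phi xs) /\ fbound k (Phi xs)) ->
  (forall i, i < k -> CX X m (C i)) -> CX X m G ->
  (forall xs, length xs = m -> G xs = gn (Phi xs)) ->
  exists t, CX X m t /\ forall xs, length xs = m -> (forall i, i < k -> Dom (C i xs)) ->
     (t xs <> 0 <-> psat M (fun i => cv (C i xs)) (Phi xs)).
Proof.
  intros HPhi HC HG HGe.
  exists (fun xs => chi D (Nat.iter k (pair 4) (gimps 0 (map (fun i => C i xs) (seq 0 k)) (G xs)))).
  split.
  - apply CXch; [auto|]. apply CX_iter; auto. apply (CX_gimps X HX m k); auto.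
    + intros i Hi. eapply CX_ext; [|apply (HC i Hi)]. intros xs _.
      rewrite (nth_map_seq (fun i => C i xs)); auto.
    + intros; rewrite length_map, length_seq; auto.
  - intros xs Hl HD. destruct (HPhi xs) as [Hp Hb].
    set (cs := map (fun i => C i xs) (seq 0 k)).
    assert (length cs = k) as Hcl by (unfold cs; rewrite length_map, length_seq; auto).
    assert (forall i, i < k -> nth i cs 0 = C i xs) as Hn.
    { intros i Hi. unfold cs. rewrite (nth_map_seq (fun i => C i xs)); auto. }
    rewrite HGe, <- Hcl, <- gn_wrap by auto.
    unfold chi; destruct excluded_middle_informative as [h|h].
    + split; [intros _|lia]. rewrite diag_wrap in h; auto.
      * unfold psat in *. refine (proj2 (sat_agree M (Phi xs) k _ _ _ Hb _) h).
        intros i Hi; simpl; rewrite Hn; auto.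
      * rewrite Hcl; auto.
      * unfold cs; intros j Hj. apply in_map_iff in Hj as [i [<- Hi]]. apply in_seq in Hi. apply HD; lia.
    + split; [lia|intros H; exfalso; apply h]. rewrite diag_wrap; auto.
      * unfold psat in *. refine (proj1 (sat_agree M (Phi xs) k _ _ _ Hb _) H).
        intros i Hi; simpl; rewrite Hn; auto.
      * rewrite Hcl; auto.
      * unfold cs; intros j Hj. apply in_map_iff in Hj as [i [<- Hi]]. apply in_seq in Hi. apply HD; lia.
Qed.

Lemma CX_psat m k (C : nat -> list nat -> nat) p :
  pure p -> fbound k p -> (forall i, i < k -> CX X m (C i)) ->
  exists t, CX X m t /\ forall xs, length xs = m -> (forall i, i < k -> Dom (C i xs)) ->
     (t xs <> 0 <-> psat M (fun i => cv (C i xs)) p).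
Proof.
  intros Hp Hb HC. apply (CX_psatG m k C (fun _ => gn p) (fun _ => p)); auto.
Qed.

Definition EF (f : nat -> M) := CX X 1 (fun xs => code (f (nth 0 xs 0))).

Lemma EF_ext f g : EF f -> (forall n, f n = g n) -> EF g.
Proof. intros H E. eapply CX_ext; [|exact H]. intros; cbv beta; rewrite E; auto. Qed.

Lemma EF_const a : EF (fun _ => a).
Proof. apply (CX_const X HX 1 (code a)). Qed.

Lemma X_psat k (F : nat -> nat -> M) p : pure p -> fbound k p ->
  (forall i, i < k -> EF (F i)) -> X (fun n => psat M (fun i => F i n) p).
Proof.
  intros Hp Hb HF.
  destruct (CX_psat 1 k (fun i xs => code (F i (nth 0 xs 0))) p Hp Hb HF) as [t [Ht Hte]].
  apply (X_from_test X HX _ (fun n => t [n])).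
  - eapply CX_ext; [|exact Ht]. intros [|n []] H; try discriminate; reflexivity.
  - intros n. rewrite (Hte [n]); auto. 2: intros; eexists; eauto.
    simpl. split; intros H; (eapply sat_ext; [|exact H]); intros i; simpl; rewrite cval_code; auto.
Qed.

Lemma search (t : list nat -> nat) : CX X 2 t ->
  (forall n, exists c : M, t [code c; n] <> 0) ->
  exists w : nat -> M, EF w /\ forall n, t [code (w n); n] <> 0.
Proof.
  intros Ht Hex.
  set (g := fun xs => 1 - chi Dom (nth 0 xs 0) * (1 - (1 - t xs))).
  assert (CX X 2 g) as Hg.
  { apply CXs. apply CXc. apply CXm. apply CXch; [auto|apply CXp].
    apply CXs. apply CXc. apply CXs. apply CXc. exact Ht. }
  assert (forall c n, g [c; n] = 0 <-> Dom c /\ t [c; n] <> 0) as Hge.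
  { intros c n. unfold g. simpl nth. unfold chi. destruct excluded_middle_informative as [d|d]; split; intros H.
    split; auto; lia. destruct H; lia. lia. destruct H; tauto. }
  set (l := fun n => least (fun c => g (c :: [n]) = 0)).
  assert (forall n, Dom (l n) /\ t [l n; n] <> 0) as Hl.
  { intros n. apply Hge. apply (least_spec (fun c => g [c; n] = 0)).
    destruct (Hex n) as [c Hc]. exists (code c). apply Hge. split; auto. exists c; auto. }
  exists (fun n => cv (l n)). split.
  - eapply CX_ext; [|apply (CX_min X 1 g Hg)].
    + intros [|n []] H; try discriminate. simpl. rewrite code_cval; [reflexivity|apply Hl].
    + intros [|n []] H; try discriminate. destruct (Hex n) as [c Hc]. exists (code c). apply Hge. split; auto. exists c; auto.
  - intros n. rewrite code_cval; apply Hl.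
Qed.

Lemma EF_def k (F : nat -> nat -> M) p (h : nat -> M) : pure p -> fbound (S k) p ->
  (forall i, i < k -> EF (F i)) ->
  (forall n a, psat M (scons a (fun i => F i n)) p -> a = h n) ->
  (forall n, psat M (scons (h n) (fun i => F i n)) p) ->
  EF h.
Proof.
  intros Hp Hb HF Huniq Hex.
  set (C := fun i xs => match i with 0 => nth 0 xs 0 | S j => code (F j (nth 1 xs 0)) end).
  destruct (CX_psat 2 (S k) C p Hp Hb) as [t [Ht Hte]].
  { intros [|i] Hi; simpl. apply CXp.
    eapply CX_ext; [|apply (CX_comp1 X HX 2 (fun xs => code (F i (nth 0 xs 0))) (fun xs => nth 1 xs 0))].
    intros; reflexivity. apply HF; lia. apply CXp. }
  destruct (search t Ht) as [w [Hw Hwt]].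
  - intros n. exists (h n). rewrite Hte; auto.
    + eapply sat_ext; [|apply Hex]. intros [|i]; simpl; rewrite cval_code; auto.
    + intros [|i] Hi; simpl; eexists; eauto.
  - apply (EF_ext w); auto. intros n. specialize (Hwt n). rewrite Hte in Hwt; auto.
    + apply Huniq. eapply sat_ext; [|apply Hwt]. intros [|i]; simpl; rewrite cval_code; auto.
    + intros [|i] Hi; simpl; eexists; eauto.
Qed.

Lemma EF_add f g : EF f -> EF g -> EF (fun n => sadd M (f n) (g n)).
Proof.
  intros Hf Hg.
  apply (EF_def 2 (fun i n => match i with 0 => f n | _ => g n end)
           (fEq (tVar 0) (tPlus (tVar 1) (tVar 2)))).
  - intros j Hj; simpl in Hj; tauto.
  - simpl; repeat split; lia.
  - intros [|[|i]] Hi; auto; lia.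
  - intros n a H. exact H.
  - intros n. reflexivity.
Qed.

Lemma EF_mul f g : EF f -> EF g -> EF (fun n => smul M (f n) (g n)).
Proof.
  intros Hf Hg.
  apply (EF_def 2 (fun i n => match i with 0 => f n | _ => g n end)
           (fEq (tVar 0) (tTimes (tVar 1) (tVar 2)))).
  - intros j Hj; simpl in Hj; tauto.
  - simpl; repeat split; lia.
  - intros [|[|i]] Hi; auto; lia.
  - intros n a H. exact H.
  - intros n. reflexivity.
Qed.

Lemma inProd_EF f : inProd X M code f -> EF f.
Proof.
  intros H. unfold inProd in H.
  set (g := fun xs => 1 - chi (graph M code f) (pair (nth 1 xs 0) (nth 0 xs 0))).
  eapply CX_ext; [|apply (CX_min X 1 g)].
  - intros [|n []] Hl; try discriminate. simpl. apply least_unique.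
    + unfold g; simpl. rewrite chi_true; auto. exists n; auto.
    + intros m Hm. unfold g; simpl. unfold chi. destruct excluded_middle_informative as [h|h]; [|lia].
      destruct h as [n' Hn']. apply pair_inj in Hn' as [<- ->]. lia.
  - apply CXs. apply CXc. apply CXch; [exact H|]. apply CXpr; apply CXp.
  - intros [|n []] Hl; try discriminate. exists (code (f n)). unfold g; simpl. rewrite chi_true; auto.
    exists n; auto.
Qed.

Lemma EF_inProd f : EF f -> inProd X M code f.
Proof.
  intros H. unfold inProd.
  set (b := fun xs => bex (fun ys => b2n (nth 1 ys 0 =? pair (nth 0 ys 0) (code (f (nth 0 ys 0))))) (S (nth 0 xs 0)) [nth 0 xs 0]).
  apply (X_from_test X HX _ (fun m => b [m])).
  - eapply CX_ext; [|apply (CX_comp2 X HX 1 (fun xs => bex (fun ys => b2n (nth 1 ys 0 =? pair (nth 0 ys 0) (code (f (nth 0 ys 0))))) (hd 0 xs) (tl xs)) (fun xs => S (nth 0 xs 0)) (fun xs => nth 0 xs 0))].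
    + intros [|m []] Hl; try discriminate. reflexivity.
    + apply CX_bex; auto. apply CXe. apply CXp. apply CXpr. apply CXp.
      apply (CX_comp1 X HX 2 (fun xs => code (f (nth 0 xs 0))) (fun xs => nth 0 xs 0)); auto.
    + apply (CX_comp1 X HX 1 (fun xs => S (nth 0 xs 0))); auto. apply CX_free; auto. intros; apply C_succ.
    + apply CXp.
  - intros m. unfold b. rewrite bex_spec. unfold graph. split.
    + intros [n ->]. exists n. split; cbn [nth]. pose proof (pair_ge1 n (code (f n))); lia.
      simpl. rewrite Nat.eqb_refl. simpl; lia.
    + intros [n [_ Hn]]. simpl in Hn. exists n. destruct (Nat.eqb_spec m (pair n (code (f n)))); auto. simpl in Hn; lia.
Qed.

End Coded.

Set Default Proof Using "All".
Section Ultra.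
Variables (X U : (nat -> Prop) -> Prop) (M : structure) (code : M -> nat).
Hypothesis HX : scott_set X.
Hypothesis Hinj : forall a b, code a = code b -> a = b.
Hypothesis HDom : X (cdomain M code).
Hypothesis HDiag : X (diagram M code).
Hypothesis HU : ultrafilter X U.

Let cvc := cval_code X HX M code Hinj HDom HDiag.
Let EFa := EF_add X HX M code Hinj HDom HDiag.
Let EFm := EF_mul X HX M code Hinj HDom HDiag.
Let EFc := EF_const X HX M code Hinj HDom HDiag.
Let iEF := inProd_EF X HX M code Hinj HDom HDiag.
Let EFi := EF_inProd X HX M code Hinj HDom HDiag.
Let Xps := X_psat X HX M code Hinj HDom HDiag.
Let CXps := CX_psat X HX M code Hinj HDom HDiag.
Let srch := search X HX M code Hinj HDom HDiag.

Notation EF := (EF X M code).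
Notation inP := (inProd X M code).

Lemma U_X A : U A -> X A.
Proof. apply HU. Qed.
Lemma U_T : U (fun _ => True).
Proof. apply HU. Qed.
Lemma U_nF : ~ U (fun _ => False).
Proof. apply HU. Qed.
Lemma U_and A B : U A -> U B -> U (fun n => A n /\ B n).
Proof. apply HU. Qed.
Lemma U_mono A B : U A -> X B -> (forall n, A n -> B n) -> U B.
Proof. apply HU. Qed.
Lemma U_dich A : X A -> U A \/ U (fun n => ~ A n).
Proof. apply HU. Qed.

Lemma X_F : X (fun _ => False).
Proof.
  apply (X_ext X HX (fun n => ~ True)). apply X_compl; auto. apply U_X, U_T. intros; tauto.
Qed.

Lemma U_not_both A : U A -> U (fun n => ~ A n) -> False.
Proof.
  intros H1 H2. apply U_nF. apply (U_mono _ _ (U_and _ _ H1 H2)). apply X_F. intros n []; auto.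
Qed.

Lemma X_eqset f g : EF f -> EF g -> X (fun n => f n = g n).
Proof.
  intros Hf Hg.
  apply (Xps 2 (fun i n => match i with 0 => f n | _ => g n end)
          (fEq (tVar 0) (tVar 1))).
  - intros j Hj; simpl in Hj; tauto.
  - simpl; lia.
  - intros [|[|i]] Hi; auto; lia.
Qed.

Lemma U_transfer E A B : U E -> X A -> X B -> (forall n, E n -> (A n <-> B n)) -> (U A <-> U B).
Proof.
  intros HE HA HB H. split; intros H1; (eapply U_mono; [apply (U_and _ _ HE H1)| auto |]);
   intros n [h1 h2]; apply (H n h1); auto.
Qed.

Lemma sig_ext (x y : Kcar X U M code) : proj1_sig x = proj1_sig y -> x = y.
Proof. destruct x, y; simpl; intros ->. f_equal. apply proof_irrelevance. Qed.

Variable HK : inhabited (Kcar X U M code).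
Notation K := (Kstr X U M code HK).
Notation lift := (lift X U M code HK).
Notation rep := (rep X U M code).
Notation cls := (cls X U M code).

Lemma lift_in f : inP f -> proj1_sig (lift f) = cls f.
Proof. intros H. unfold Defs.lift. destruct excluded_middle_informative; [reflexivity|contradiction]. Qed.

Lemma rep_spec C : inP (rep C) /\ proj1_sig C = cls (rep C).
Proof. unfold Defs.rep. destruct constructive_indefinite_description as [f Hf]. simpl. exact Hf. Qed.

Lemma EF_rep C : EF (rep C).
Proof. apply iEF; auto. apply rep_spec. Qed.

Lemma U_refl f : EF f -> U (fun n => f n = f n).
Proof. intros H. eapply U_mono. apply U_T. apply X_eqset; auto. auto. Qed.

Lemma cls_eq f g : EF f -> EF g -> U (fun n => f n = g n) -> cls f = cls g.
Proof.
  intros Hf Hg H. apply functional_extensionality; intros h. apply propositional_extensionality.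
  unfold Defs.cls. split; intros [Hh Hu]; split; auto.
  - apply (U_mono _ _ (U_and _ _ H Hu)). apply X_eqset; auto.
    intros n [<- <-]; auto.
  - apply (U_mono _ _ (U_and _ _ H Hu)). apply X_eqset; auto.
    intros n [-> <-]; auto.
Qed.

Lemma cls_eq_conv f g : EF g -> cls f = cls g -> U (fun n => f n = g n).
Proof.
  intros Hg H. assert (cls g g) as Hgg. { split. apply EFi; auto. apply U_refl; auto. }
  rewrite <- H in Hgg. apply Hgg.
Qed.

Lemma lift_eq f g : EF f -> EF g -> (lift f = lift g <-> U (fun n => f n = g n)).
Proof.
  intros Hf Hg. split.
  - intros H. apply cls_eq_conv; auto. rewrite <- !lift_in; try (apply EFi; auto). rewrite H; auto.
  - intros H. apply sig_ext. rewrite !lift_in; try (apply EFi; auto). apply cls_eq; auto.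
Qed.

Lemma lift_rep C : lift (rep C) = C.
Proof. apply sig_ext. rewrite lift_in by apply rep_spec. symmetry; apply rep_spec. Qed.

Lemma rep_lift f : EF f -> U (fun n => rep (lift f) n = f n).
Proof.
  intros Hf. apply cls_eq_conv; auto. rewrite <- (proj2 (rep_spec (lift f))). apply lift_in.
  apply EFi; auto.
Qed.

Definition rn (r : nat -> K) (n : nat) : nat -> M := fun i => rep (r i) n.

Lemma term_los t (r : nat -> K) :
  EF (fun n => teval M (fun _ => szero M) (rn r n) t) /\
  teval K (fun _ => szero K) r t = lift (fun n => teval M (fun _ => szero M) (rn r n) t).
Proof.
  induction t; cbn [teval].
  - split. apply EF_rep. unfold rn. symmetry; apply lift_rep.
  - split. apply EFc. reflexivity.
  - split. apply EFc. reflexivity.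
  - split. apply EFc. reflexivity.
  - destruct IHt1 as [H1 E1], IHt2 as [H2 E2]. split. apply EFa; auto.
    rewrite E1, E2. apply lift_eq. apply EFa; auto; apply EF_rep. apply EFa; auto.
    eapply U_mono. apply (U_and _ _ (rep_lift _ H1) (rep_lift _ H2)).
    apply X_eqset. apply EFa; auto; apply EF_rep. apply EFa; auto.
    intros n [-> ->]; reflexivity.
  - destruct IHt1 as [H1 E1], IHt2 as [H2 E2]. split. apply EFm; auto.
    rewrite E1, E2. apply lift_eq. apply EFm; auto; apply EF_rep. apply EFm; auto.
    eapply U_mono. apply (U_and _ _ (rep_lift _ H1) (rep_lift _ H2)).
    apply X_eqset. apply EFm; auto; apply EF_rep. apply EFm; auto.
    intros n [-> ->]; reflexivity.
Qed.

Lemma X_los k p (r : nat -> K) : pure p -> fbound k p -> X (fun n => psat M (rn r n) p).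
Proof.
  intros Hp Hb. apply (Xps k (fun i n => rep (r i) n) p Hp Hb).
  intros; apply EF_rep.
Qed.

Lemma pure_imp1 p q : pure (fImp p q) -> pure p.
Proof. intros H k Hk; apply (H k); simpl; auto. Qed.
Lemma pure_imp2 p q : pure (fImp p q) -> pure q.
Proof. intros H k Hk; apply (H k); simpl; auto. Qed.
Lemma pure_all p : pure (fAll p) -> pure p.
Proof. intros H k Hk; apply (H k); simpl; auto. Qed.

Theorem los p : pure p -> forall k, fbound k p -> forall r : nat -> K,
  (psat K r p <-> U (fun n => psat M (rn r n) p)).
Proof.
  induction p; intros Hp k Hb r; unfold psat in *; cbn [sat].
  - destruct (term_los t r) as [H1 E1], (term_los u r) as [H2 E2].
    rewrite E1, E2. apply lift_eq; auto.
  - destruct (term_los t r) as [H1 E1], (term_los u r) as [H2 E2].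
    rewrite E1, E2. simpl.
    apply (U_transfer _ _ _ (U_and _ _ (rep_lift _ H1) (rep_lift _ H2))).
    + apply (Xps 2 (fun i n => match i with 0 => rep (lift (fun n => teval M (fun _ => szero M) (rn r n) t)) n | _ => rep (lift (fun n => teval M (fun _ => szero M) (rn r n) u)) n end)
          (fLt (tVar 0) (tVar 1))).
      * intros j Hj; simpl in Hj; tauto.
      * simpl; lia.
      * intros [|[|i]] Hi; try apply EF_rep; lia.
    + apply (Xps 2 (fun i n => match i with 0 => teval M (fun _ => szero M) (rn r n) t | _ => teval M (fun _ => szero M) (rn r n) u end)
          (fLt (tVar 0) (tVar 1))).
      * intros j Hj; simpl in Hj; tauto.
      * simpl; lia.
      * intros [|[|i]] Hi; auto; lia.
    + intros n [-> ->]; tauto.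
  - split; [tauto|intros H; exfalso; apply U_nF; exact H].
  - simpl in Hb. destruct Hb as [Hb1 Hb2].
    specialize (IHp1 (pure_imp1 _ _ Hp) k Hb1 r). specialize (IHp2 (pure_imp2 _ _ Hp) k Hb2 r).
    unfold psat in IHp1, IHp2. rewrite IHp1, IHp2.
    pose proof (X_los k p1 r (pure_imp1 _ _ Hp) Hb1) as X1.
    pose proof (X_los k p2 r (pure_imp2 _ _ Hp) Hb2) as X2.
    unfold psat in X1, X2.
    assert (X (fun n => sat M (fun _ => szero M) (rn r n) p1 -> sat M (fun _ => szero M) (rn r n) p2)) as X12.
    { apply (X_ext X HX (fun n => ~ sat M (fun _ => szero M) (rn r n) p1 \/ sat M (fun _ => szero M) (rn r n) p2)).
      apply X_union; auto. apply X_compl; auto. intros n. destruct (classic (sat M (fun _ => szero M) (rn r n) p1)); tauto. }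
    split.
    + intros H. destruct (U_dich _ X1) as [h|h].
      * apply (U_mono _ _ (H h) X12). auto.
      * apply (U_mono _ _ h X12). tauto.
    + intros H h. apply (U_mono _ _ (U_and _ _ H h) X2). tauto.
  - simpl in Hb. specialize (IHp (pure_all _ Hp) (S k) Hb).
    assert (forall a n, sat M (fun _ => szero M) (rn (scons a r) n) p <-> sat M (fun _ => szero M) (scons (rep a n) (rn r n)) p) as Hsc.
    { intros a n. apply sat_ext. intros [|i]; reflexivity. }
    assert (X (fun n => forall a : M, sat M (fun _ => szero M) (scons a (rn r n)) p)) as XA.
    { apply (X_los k (fAll p) r Hp Hb). }
    split.
    + intros H. destruct (U_dich _ XA) as [h|h]; auto. exfalso.
      destruct (CXps 2 (S k)
                  (fun i xs => match i with 0 => nth 0 xs 0 | S j => code (rep (r j) (nth 1 xs 0)) end)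
                  (fNeg p)) as [t1 [Ht1 Ht1e]].
      { intros j Hj; simpl in Hj; destruct Hj as [Hj|[]]. apply (Hp j); auto. }
      { simpl; auto. }
      { intros [|i] Hi. apply CX_proj; auto.
        apply (CX_comp1 X HX 2 (fun xs => code (rep (r i) (nth 0 xs 0))) (fun xs => nth 1 xs 0)). apply EF_rep. apply CX_proj; auto. }
      destruct (CXps 2 k
                  (fun i xs => code (rep (r i) (nth 1 xs 0))) (fAll p)) as [t2 [Ht2 Ht2e]]; auto.
      { intros i Hi. apply (CX_comp1 X HX 2 (fun xs => code (rep (r i) (nth 0 xs 0))) (fun xs => nth 1 xs 0)). apply EF_rep. apply CX_proj; auto. }
      destruct (srch (fun xs => t1 xs + t2 xs)) as [w [Hw Hwt]].
      { apply CX_add; auto. }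
      { intros n. destruct (classic (forall a : M, sat M (fun _ => szero M) (scons a (rn r n)) p)) as [Ha|Ha].
        - exists (szero M). assert (t2 [code (szero M); n] <> 0); [|lia].
          rewrite Ht2e; [|reflexivity|intros; simpl; eexists; eauto].
          unfold psat; simpl. intros a. eapply sat_ext; [|apply (Ha a)]. intros [|i]; simpl; unfold rn; cbn [nth]; try (symmetry; apply cvc); try apply cvc; auto.
        - apply not_all_ex_not in Ha as [a Ha]. exists a. assert (t1 [code a; n] <> 0); [|lia].
          rewrite Ht1e; [|reflexivity|intros [|i] _; simpl; eexists; eauto].
          unfold psat; simpl. intros Hs. apply Ha. eapply sat_ext; [|apply Hs]. intros [|i]; rewrite cvc; reflexivity. }
      specialize (H (lift w)). unfold psat in H. rewrite IHp in H.
      apply U_nF. eapply U_mono. apply (U_and _ _ (U_and _ _ H h) (rep_lift w Hw)). apply X_F.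
      intros n [[H1 H2] H3]. specialize (Hwt n).
      destruct (Nat.eq_dec (t2 [code (w n); n]) 0) as [E2|E2].
      * assert (t1 [code (w n); n] <> 0) as E1 by lia.
        rewrite Ht1e in E1; [|reflexivity|intros [|i] _; simpl; eexists; eauto].
        apply E1. rewrite Hsc, H3 in H1. eapply sat_ext; [|apply H1]. intros [|i]; simpl; unfold rn; cbn [nth]; try (symmetry; apply cvc); try apply cvc; auto.
      * rewrite Ht2e in E2; [|reflexivity|intros; simpl; eexists; eauto].
        apply H2. intros a. eapply sat_ext; [|apply (E2 a)]. intros [|i]; simpl; unfold rn; cbn [nth]; try (symmetry; apply cvc); try apply cvc; auto.
    + intros H a. unfold psat in IHp. rewrite IHp. eapply U_mono. apply H.
      apply (X_los (S k) p (scons a r) (pure_all _ Hp) Hb).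
      intros n Hn. rewrite Hsc. apply Hn.
Qed.

End Ultra.

Lemma tbound_mono t : forall k k', k <= k' -> tbound k t -> tbound k' t.
Proof. induction t; simpl; intros; intuition eauto. lia. Qed.

Lemma fbound_mono p : forall k k', k <= k' -> fbound k p -> fbound k' p.
Proof.
  induction p; simpl; intros k k' Hk H; intuition eauto using tbound_mono. apply (IHp (S k)); auto; lia.
Qed.

Lemma tbound_exists t : exists k, tbound k t.
Proof.
  induction t; simpl; try (exists 0; auto; fail).
  - exists (S n); lia.
  - destruct IHt1 as [a Ha], IHt2 as [b Hb]. exists (a + b). split; [apply (tbound_mono t1 a)|apply (tbound_mono t2 b)]; auto; lia.
  - destruct IHt1 as [a Ha], IHt2 as [b Hb]. exists (a + b). split; [apply (tbound_mono t1 a)|apply (tbound_mono t2 b)]; auto; lia.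
Qed.

Lemma fbound_exists p : exists k, fbound k p.
Proof.
  induction p; simpl; try (exists 0; auto; fail).
  - destruct (tbound_exists t) as [a Ha], (tbound_exists u) as [b Hb]. exists (a + b). split; [apply (tbound_mono t a)|apply (tbound_mono u b)]; auto; lia.
  - destruct (tbound_exists t) as [a Ha], (tbound_exists u) as [b Hb]. exists (a + b). split; [apply (tbound_mono t a)|apply (tbound_mono u b)]; auto; lia.
  - destruct IHp1 as [a Ha], IHp2 as [b Hb]. exists (a + b). split; [apply (fbound_mono p1 a)|apply (fbound_mono p2 b)]; auto; lia.
  - destruct IHp as [a Ha]. exists a. apply (fbound_mono p a); auto.
Qed.

Definition fTrue := fImp fFalse fFalse.

Fixpoint psiF (R : nat -> Prop) (dec : nat -> form) (m : nat) : form :=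
  match m with
  | 0 => fTrue
  | S j => if excluded_middle_informative (R j) then fAnd (dec j) (psiF R dec j) else psiF R dec j
  end.

Lemma psi_pure R dec m : (forall j, R j -> pure (dec j)) -> pure (psiF R dec m).
Proof.
  intros H. induction m; simpl.
  - intros k Hk; simpl in Hk; tauto.
  - destruct excluded_middle_informative as [h|h]; auto.
    intros k Hk. simpl in Hk. destruct Hk as [[Hk|[Hk|[]]]|[]]. apply (H m h k Hk). apply (IHm k Hk).
Qed.

Lemma psi_bound R dec m k : (forall j, R j -> fbound k (dec j)) -> fbound k (psiF R dec m).
Proof.
  intros H. induction m; simpl.
  - unfold fTrue; simpl; auto.
  - destruct excluded_middle_informative as [h|h]; auto. simpl. repeat split; auto.
Qed.

Lemma sat_and (M : structure) c r p q : sat M c r (fAnd p q) <-> sat M c r p /\ sat M c r q.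
Proof.
  simpl. split.
  - intros H. destruct (classic (sat M c r p)), (classic (sat M c r q)); tauto.
  - tauto.
Qed.

Lemma psi_sat (M : structure) c r R dec m :
  sat M c r (psiF R dec m) <-> forall j, j < m -> R j -> sat M c r (dec j).
Proof.
  induction m; cbn [psiF].
  - split; [intros _ j Hj; lia| intros _ h; exact h].
  - destruct excluded_middle_informative as [h|h].
    + rewrite sat_and, IHm. split.
      * intros [H1 H2] j Hj Rj. destruct (Nat.eq_dec j m); subst; auto. apply H2; auto; lia.
      * intros H; split; [apply H; auto|]. intros j Hj Rj; apply H; auto.
    + rewrite IHm. split; intros H j Hj Rj.
      * destruct (Nat.eq_dec j m); subst; [tauto|]. apply H; auto; lia.
      * apply H; auto.
Qed.

Definition ANDg a b := pair 3 (pair (pair 3 (pair a (pair 3 (pair b (pair 2 0))))) (pair 2 0)).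
Definition EXg g := pair 3 (pair (pair 4 (pair 3 (pair g (pair 2 0)))) (pair 2 0)).

Lemma gn_and p q : gn (fAnd p q) = ANDg (gn p) (gn q).
Proof. reflexivity. Qed.
Lemma gn_ex q : gn (fEx q) = EXg (gn q).
Proof. reflexivity. Qed.

Fixpoint gpsiF (e : nat -> nat) (m : nat) : nat :=
  match m with
  | 0 => gn fTrue
  | S j => if e j =? 0 then gpsiF e j else ANDg j (gpsiF e j)
  end.

Lemma gn_psi R dec m : (forall j, R j -> gn (dec j) = j) -> gn (psiF R dec m) = gpsiF (chi R) m.
Proof.
  intros H. induction m; cbn [psiF gpsiF]; auto.
  destruct excluded_middle_informative as [h|h].
  - rewrite chi_true by auto. cbn [Nat.eqb]. rewrite gn_and, H, IHm; auto.
  - rewrite chi_false by auto. cbn [Nat.eqb]. auto.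
Qed.

Lemma sat_ex (M : structure) c r q : sat M c r (fEx q) <-> exists a, sat M c (scons a r) q.
Proof.
  simpl. split.
  - intros H. apply NNPP. intros Hn. apply H. intros a Ha. apply Hn. exists a; auto.
  - intros [a Ha] H. apply (H a Ha).
Qed.

Fixpoint Kf (e : nat -> nat) (j : nat) : nat :=
  match j with
  | 0 => 0
  | S j' => if e (S j') =? 0 then Kf e j' else S j'
  end.

Lemma Kf_le e j : Kf e j <= j.
Proof. induction j; simpl; auto. destruct (_ =? 0); lia. Qed.

Lemma Kf_max e j m : 0 < m -> m <= j -> e m <> 0 -> m <= Kf e j.
Proof.
  induction j; simpl; intros H0 H1 H2. lia.
  destruct (Nat.eqb_spec (e (S j)) 0).
  - destruct (Nat.eq_dec m (S j)); subst; [tauto|]. apply IHj; auto; lia.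
  - lia.
Qed.

Lemma Kf_prop e j : Kf e j = 0 \/ e (Kf e j) <> 0.
Proof.
  induction j; simpl; auto. destruct (Nat.eqb_spec (e (S j)) 0); auto.
Qed.

Lemma CX_gpsi X (HX : scott_set X) R : X R -> CX X 1 (fun xs => gpsiF (chi R) (nth 0 xs 0)).
Proof.
  intros XR.
  eapply CX_ext; [| apply (CX_prec X HX 0 (fun _ => gn fTrue)
     (fun ys => if chi R (nth 0 ys 0) =? 0 then nth 1 ys 0 else ANDg (nth 0 ys 0) (nth 1 ys 0)))].
  - intros [|m []] H; try discriminate. simpl. clear H. induction m; simpl; auto. rewrite IHm. reflexivity.
  - apply CX_const; auto.
  - apply CX_ite; auto. apply CX_chi; auto. apply CX_proj; auto. 2: apply CX_proj; auto.
    unfold ANDg. repeat (apply CX_pair; auto); try apply CX_const; auto; apply CX_proj; auto.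
Qed.

Set Default Proof Using "All".
Section Sat2.
Variables (X U : (nat -> Prop) -> Prop) (M : structure) (code : M -> nat).
Hypothesis HX : scott_set X.
Hypothesis Hinj : forall a b, code a = code b -> a = b.
Hypothesis HDom : X (cdomain M code).
Hypothesis HDiag : X (diagram M code).
Hypothesis HU : ultrafilter X U.
Hypothesis Hnp : nonprincipal U.
Variable HK : inhabited (Kcar X U M code).

Notation K := (Kstr X U M code HK).
Notation lift := (lift X U M code HK).
Notation rep := (rep X U M code).
Notation EF := (EF X M code).

Let cvc := cval_code X HX M code Hinj HDom HDiag.
Let Xps := X_psat X HX M code Hinj HDom HDiag.
Let los' := los X U M code HX Hinj HDom HDiag HU HK.
Let U_mono' := U_mono X U M code HX Hinj HDom HDiag HU.
Let U_and' := U_and X U M code HX Hinj HDom HDiag HU.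
Let U_T' := U_T X U M code HX Hinj HDom HDiag HU.
Let U_nF' := U_nF X U M code HX Hinj HDom HDiag HU.
Let U_dich' := U_dich X U M code HX Hinj HDom HDiag HU.
Let X_F' := X_F X U M code HX Hinj HDom HDiag HU.
Let X_eqset' := X_eqset X U M code HX Hinj HDom HDiag HU.
Let rep_lift' := rep_lift X U M code HX Hinj HDom HDiag HU HK.
Let EF_rep' := EF_rep X U M code HX Hinj HDom HDiag HU.
Let U_X' := U_X X U M code HX Hinj HDom HDiag HU.
Let X_los' := X_los X U M code HX Hinj HDom HDiag HU.

Lemma X_inter_fin (P : nat -> nat -> Prop) k : (forall i, i < k -> X (P i)) ->
  X (fun n => forall i, i < k -> P i n).
Proof.
  induction k; intros H.
  - apply (X_ext X HX (fun _ => True)). apply U_X', U_T'. intros n; split; auto. intros _ i Hi; lia.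
  - apply (X_ext X HX (fun n => (forall i, i < k -> P i n) /\ P k n)).
    apply X_inter; auto.
    intros n; split.
    + intros [H1 H2] i Hi. destruct (Nat.eq_dec i k); subst; auto. apply H1; lia.
    + intros H1; split; auto.
Qed.

Lemma U_fin (P : nat -> nat -> Prop) k : (forall i, i < k -> U (P i)) ->
  U (fun n => forall i, i < k -> P i n).
Proof.
  induction k; intros H.
  - eapply U_mono'. apply U_T'. apply X_inter_fin. intros; lia. intros n _ i Hi; lia.
  - eapply U_mono'. apply (U_and' _ _ (IHk (fun i Hi => H i (Nat.lt_lt_succ_r _ _ Hi))) (H k (Nat.lt_succ_diag_r k))).
    apply X_inter_fin. intros i Hi. apply U_X', H, Hi.
    intros n [H1 H2] i Hi. destruct (Nat.eq_dec i k); subst; auto. apply H1; lia.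
Qed.

Theorem elem : elementary (diag_emb X U M code HK).
Proof.
  intros p Hp r. destruct (fbound_exists p) as [k Hb].
  unfold diag_emb. rewrite (los' p Hp k Hb).
  assert (U (fun n => forall i, i < k -> rep (lift (fun _ => r i)) n = r i)) as HE.
  { apply U_fin. intros i _. apply rep_lift'. apply EF_const; auto. }
  assert (forall n, (forall i, i < k -> rep (lift (fun _ => r i)) n = r i) ->
     (psat M (rn X U M code HK (fun n => lift (fun _ => r n)) n) p <-> psat M r p)) as Hag.
  { intros n Hn. apply sat_agree with (k := k); auto. }
  pose proof (X_los' HK k p (fun n => lift (fun _ => r n)) Hp Hb) as HXs.
  split.
  - intros H. eapply U_mono'. apply HE. apply HXs. intros n Hn. apply Hag; auto.
  - intros H. destruct (classic (psat M r p)) as [h|h]; auto. exfalso. apply U_nF'.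
    eapply U_mono'. apply (U_and' _ _ H HE). apply X_F'. intros n [H1 H2]. apply h. apply (Hag n H2). exact H1.
Qed.

Let CXps := CX_psatG X HX M code Hinj HDom HDiag.
Let srch := search X HX M code Hinj HDom HDiag.

Lemma X_test A (t : nat -> nat) : CX X 1 (fun xs => t (nth 0 xs 0)) -> (forall n, A n <-> t n <> 0) -> X A.
Proof. apply X_from_test; auto. Qed.

Lemma U_ge j : U (fun n => j <= n).
Proof.
  assert (forall j, X (fun n => n < j)) as Xlt.
  { intros j0. apply (X_test _ (fun n => b2n (n <? j0))).
    apply CX_ltb; auto. apply CX_proj; auto. apply CX_const; auto.
    intros n. destruct (Nat.ltb_spec n j0); simpl; split; intros; lia. }
  assert (forall j, ~ U (fun n => n < j)) as H.
  { induction j0 as [|j0 IH]; intros Hu.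
    - apply U_nF'. eapply U_mono'. apply Hu. apply X_F'. intros n0 Hn0; cbv beta in Hn0; lia.
    - destruct (U_dich' (fun n => n < j0) (Xlt j0)) as [h|h].
      + exact (IH h).
      + apply (Hnp j0). eapply U_mono'. apply (U_and' _ _ Hu h).
        * apply (X_test _ (fun n => b2n (n =? j0))).
          apply CX_eqb; auto. apply CX_proj; auto. apply CX_const; auto.
          intros n. destruct (Nat.eqb_spec n j0); simpl; split; intros; lia.
        * intros n [h1 h2]; lia. }
  destruct (U_dich' (fun n => n < j) (Xlt j)) as [h|h]. exfalso; eapply H; eauto.
  eapply U_mono'; [apply h| |intros n0 Hn0; cbv beta in *; lia].
  apply (X_test _ (fun n => 1 - b2n (n <? j))).
  apply CX_sub; auto. apply CX_const; auto. apply CX_ltb; auto. apply CX_proj; auto. apply CX_const; auto.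
  intros n. destruct (Nat.ltb_spec n j); simpl; split; intros; lia.
Qed.

Theorem recsat : rec_saturated K.
Proof.
  intros np P b HP Hrec Hfin.
  set (R := fun m => exists p, P p /\ gn p = m).
  assert (XR : X R).
  { pose proof HX as HX2; destruct HX2 as [_ [_ [_ [Ht _]]]]. apply (Ht R (fun _ => False)); auto. }
  set (dec := fun j => epsilon (inhabits fFalse) (fun p => P p /\ gn p = j)).
  assert (Hdec : forall j, R j -> P (dec j) /\ gn (dec j) = j).
  { intros j Hj. apply (epsilon_spec (inhabits fFalse) (fun p => P p /\ gn p = j)). exact Hj. }
  set (psi := psiF R dec).
  assert (Hpsi_pure : forall m, pure (psi m)).
  { intros m. apply psi_pure. intros j Hj. apply HP, Hdec, Hj. }
  assert (Hpsi_b : forall m, fbound (S np) (psi m)).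
  { intros m. apply psi_bound. intros j Hj. apply HP, Hdec, Hj. }
  assert (Hgpsi : forall m, gn (psi m) = gpsiF (chi R) m).
  { intros m. apply gn_psi. intros j Hj. apply Hdec, Hj. }
  pose proof (CX_gpsi X HX R XR) as CXg.
  set (Cb := fun i xs => code (rep (b i) (nth 1 xs 0))).
  assert (HCb : forall i, CX X 2 (Cb i)).
  { intros i. apply (CX_comp1 X HX 2 (fun xs => code (rep (b i) (nth 0 xs 0))) (fun xs => nth 1 xs 0)).
    apply EF_rep'; auto. apply CX_proj; auto. }
  assert (HCbD : forall i xs, cdomain M code (Cb i xs)).
  { intros i xs. unfold Cb. eexists; reflexivity. }
  destruct (CXps 2 np Cb (fun xs => EXg (gpsiF (chi R) (nth 0 xs 0))) (fun xs => fEx (psi (nth 0 xs 0))))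
    as [tE [HtE HtEe]].
  { intros xs. split. intros k Hk; simpl in Hk. destruct Hk as [[Hk|[]]|[]]. apply (Hpsi_pure _ k Hk).
    simpl. auto. }
  { intros i _; auto. }
  { unfold EXg. repeat (apply CX_pair; auto); try apply CX_const; auto.
    apply (CX_comp1 X HX 2 (fun xs => gpsiF (chi R) (nth 0 xs 0)) (fun xs => nth 0 xs 0)); auto. apply CX_proj; auto. }
  { intros xs _. rewrite gn_ex, Hgpsi. reflexivity. }
  assert (HE : forall m n, tE [m; n] <> 0 <-> psat M (rn X U M code HK b n) (fEx (psi m))).
  { intros m n. rewrite HtEe; [|reflexivity|intros; auto]. unfold psat.
    split; intros H; (eapply sat_ext; [|exact H]); intros i; unfold Cb, rn; simpl; rewrite cvc; auto. }
  set (kk := fun n => Kf (fun m => tE [m; n]) n).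
  assert (Hkk : CX X 1 (fun xs => kk (nth 0 xs 0))).
  { set (g := fun ys => if tE [S (nth 0 ys 0); nth 2 ys 0] =? 0 then nth 1 ys 0 else S (nth 0 ys 0)).
    assert (CX X 3 g) as Hg.
    { assert (CX X 3 (fun ys => S (nth 0 ys 0))) as HS.
      { eapply CX_ext; [|apply (CX_add X HX 3 (fun ys => nth 0 ys 0) (fun _ => 1)); [apply CX_proj; auto|apply CX_const; auto]].
        intros; cbv beta; lia. }
      apply CX_ite; auto.
      - apply (CX_comp2 X HX 3 tE (fun ys => S (nth 0 ys 0)) (fun ys => nth 2 ys 0)); auto. apply CX_proj; auto.
      - apply CX_proj; auto. }
    pose proof (CX_prec X HX 1 (fun _ => 0) g (CX_const X HX 1 0) Hg) as Hp.
    eapply CX_ext; [|apply (CX_comp2 X HX 1 _ (fun xs => nth 0 xs 0) (fun xs => nth 0 xs 0) Hp)].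
    - intros [|n []] H; try discriminate. unfold kk. simpl. clear H.
      assert (forall j, precf (fun _ => 0) g j [n] = Kf (fun m => tE [m; n]) j) as Hj.
      { induction j; simpl; auto. unfold g at 1; simpl. rewrite IHj. reflexivity. }
      apply Hj.
    - apply CX_proj; auto.
    - apply CX_proj; auto. }
  assert (HE0 : forall n, psat M (rn X U M code HK b n) (fEx (psi 0))).
  { intros n. unfold psat. rewrite sat_ex. exists (szero M). simpl. unfold fTrue; simpl; auto. }
  assert (Hkk1 : forall n, psat M (rn X U M code HK b n) (fEx (psi (kk n)))).
  { intros n. destruct (Kf_prop (fun m => tE [m; n]) n) as [h|h]; unfold kk.
    - rewrite h. apply HE0.
    - apply HE. exact h. }
  set (Cw := fun i xs => match i with 0 => nth 0 xs 0 | S j => Cb j xs end).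
  destruct (CXps 2 (S np) Cw (fun xs => gpsiF (chi R) (kk (nth 1 xs 0))) (fun xs => psi (kk (nth 1 xs 0))))
    as [tW [HtW HtWe]].
  { intros xs. auto. }
  { intros [|i] _; unfold Cw. apply CX_proj; auto. exact (HCb i). }
  { apply (CX_comp1 X HX 2 (fun xs => gpsiF (chi R) (nth 0 xs 0)) (fun xs => kk (nth 1 xs 0))); auto.
    apply (CX_comp1 X HX 2 (fun xs => kk (nth 0 xs 0)) (fun xs => nth 1 xs 0)); auto. apply CX_proj; auto. }
  { intros xs _. rewrite Hgpsi. reflexivity. }
  assert (HW : forall a n, tW [code a; n] <> 0 <-> psat M (scons a (rn X U M code HK b n)) (psi (kk n))).
  { intros a n. rewrite HtWe; [|reflexivity|intros [|i] _; simpl; [eexists; eauto|auto]].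
    unfold psat. split; intros H; (eapply sat_ext; [|exact H]); intros [|i]; unfold Cw, Cb, rn; simpl; rewrite cvc; auto. }
  destruct (srch tW HtW) as [w [Hw Hwt]].
  { intros n. specialize (Hkk1 n). unfold psat in Hkk1. rewrite sat_ex in Hkk1. destruct Hkk1 as [a Ha].
    exists a. apply HW. exact Ha. }
  exists (lift w). intros p Hp. set (j := gn p).
  assert (HL : forall m, exists L, forall q, In q L <-> P q /\ gn q < m).
  { induction m as [|m [L HL]].
    - exists []. intros q; simpl; split; [tauto|lia].
    - destruct (classic (R m)) as [h|h].
      + exists (dec m :: L). intros q. simpl. rewrite HL. split.
        * intros [<-|[H1 H2]]. split; [apply Hdec; auto|]. rewrite (proj2 (Hdec m h)); lia. split; auto; lia.
        * intros [H1 H2]. destruct (Nat.eq_dec (gn q) m); [left|right; split; auto; lia].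
          apply gn_inj. rewrite (proj2 (Hdec m h)); auto.
      + exists L. intros q. rewrite HL. split; [intros [H1 H2]; split; auto; lia|].
        intros [H1 H2]. split; auto. destruct (Nat.eq_dec (gn q) m); [|lia]. exfalso; apply h. exists q; auto. }
  destruct (HL (S j)) as [L HLe].
  destruct (Hfin L) as [a Ha]. { intros q Hq. apply HLe; auto. }
  assert (HKex : psat K b (fEx (psi (S j)))).
  { unfold psat. rewrite sat_ex. exists a. unfold psi. rewrite psi_sat. intros j' Hj' Rj'.
    apply Ha. apply HLe. split. apply Hdec; auto. rewrite (proj2 (Hdec j' Rj')). auto. }
  rewrite (los' (fEx (psi (S j)))) with (k := np) in HKex.
  2: { intros k Hk; simpl in Hk. destruct Hk as [[Hk|[]]|[]]. apply (Hpsi_pure _ k Hk). }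
  2: { simpl. auto. }
  rewrite (los' p (proj1 (HP p Hp)) (S np) (proj2 (HP p Hp))).
  eapply U_mono'. apply (U_and' _ _ (U_and' _ _ HKex (U_ge (S j))) (rep_lift' w Hw)).
  apply (X_los' HK (S np)). apply HP; auto. apply HP; auto.
  intros n [[H1 H2] H3].
  assert (S j <= kk n) as Hk.
  { unfold kk. apply Kf_max; auto. lia. apply HE. exact H1. }
  specialize (Hwt n). rewrite HW in Hwt. unfold psat in Hwt. unfold psi in Hwt. rewrite psi_sat in Hwt.
  assert (R j) as Rj by (exists p; auto).
  specialize (Hwt j ltac:(lia) Rj).
  assert (dec j = p) as Hdp. { apply gn_inj. rewrite (proj2 (Hdec j Rj)). reflexivity. }
  rewrite Hdp in Hwt. unfold psat. eapply sat_ext; [|exact Hwt].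
  intros [|i]; unfold rn; simpl; auto.
Qed.

End Sat2.

Theorem mainTheorem20
  (X : (nat -> Prop) -> Prop) (T : nat -> Prop) (M : structure) (code : M -> nat)
  (U : (nat -> Prop) -> Prop) :
  scott_set X ->
  X T -> compl_ext_PA T ->
  models_LA M T ->
  coded_in X M code ->
  ultrafilter X U -> nonprincipal U ->
  exists HK : inhabited (Kcar X U M code),
    elementary (diag_emb X U M code HK) /\
    rec_saturated (Kstr X U M code HK).
Proof.
  intros HX _ _ _ [Hinj [HDom HDiag]] HU Hnp.
  assert (Hin : inProd X M code (fun _ => szero M)).
  { apply (EF_inProd X HX M code Hinj HDom HDiag). apply (EF_const X HX M code Hinj HDom HDiag). }
  set (C0 := exist (fun C => exists f, inProd X M code f /\ C = cls X U M code f)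
                   (cls X U M code (fun _ => szero M)) (ex_intro _ _ (conj Hin eq_refl))).
  exists (inhabits C0). split.
  - apply (elem X U M code HX Hinj HDom HDiag HU Hnp).
  - apply (recsat X U M code HX Hinj HDom HDiag HU Hnp).
Qed.
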